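(* Consider a switched network with data $(N,\mathcal S,R,f)$ satisfying the standing assumptions, running MW-$f$, with random finite initial queue size $Q(0)$ and an arrival process $A$ with stationary increments, well-defined mean arrival rate $\lambda$ ($\lambda_n=\lim_{\tau\to\infty}A_n(\tau)/\tau$ a.s., deterministic), and deviation terms $\delta_r\to0$ with $\mathbb P(\sup_{\tau\le r}\frac1r|A(\tau)-\lambda\tau|\ge\delta_r)\to0$ as $r\to\infty$. For $r\in\mathbb N$ and fixed $T>0$ let $\bar x^r(t)=(Q(rt),A(rt),Y(rt),S(rt))/r$, $t\in[0,T]$. Then for every $\delta>0$, $\mathbb P\big(d(\bar x^r(\cdot),\mathrm{FMS}(0))<\delta\big)\to1$ as $r\to\infty$.
   Context: Norms: $|x|=\max_i|x_i|$; for $g,h$ continuous on $[0,T]$, $d(g,h)=\sup_{t\in[0,T]}|g(t)-h(t)|$, and $d(g,\mathcal E)=\inf_{h\in\mathcal E}d(g,h)$. Switched network: $N$ queues; finite $\mathcal S\subset\mathbb R_+^N$; routing matrix $R\in\{0,1\}^{N\times N}$, at most one 1 per row, acyclic; $R=0$ single-hop. Discrete-time dynamics $\tau\in\{0,1,\dots\}$: $A(0)=B(0)=Y(0)=0$; $dB(\tau)=B(\tau+1)-B(\tau)\in\mathcal S$; $Y(\tau+1)-Y(\tau)=[dB(\tau)-Q(\tau)]^+$; $S_\pi(\tau)=\#\{\tau'<\tau:dB(\tau')=\pi\}$; $Q(\tau)=Q(0)+A(\tau)-(I-R^T)(B(\tau)-Y(\tau))$; processes extended to real time by linear interpolation. MW-$f$: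 $dB(\tau)\in\arg\max_{\pi\in\mathcal S}\pi\cdot(I-R)f(Q(\tau))$. Standing assumptions: $f:\mathbb R_+\to\mathbb R_+$ differentiable, strictly increasing, $f(0)=0$, and maximizers of $\rho\mapsto\rho\cdot(I-R)f(q)$ over $\mathcal S$ remain maximizers of $\rho\mapsto\rho\cdot(I-R)f(\kappa q)$ for all $\kappa\ge0$; in the multi-hop case, $\pi\in\mathcal S$ and $\rho_n\in\{0,\pi_n\}\ \forall n$ imply $\rho\in\mathcal S$. Fluid model solution with arrival rate $\lambda$ on $[0,T]$: $x=(q,a,y,s)$, $q,a,y:[0,T]\to\mathbb R_+^N$, $s=(s_\pi)_{\pi\in\mathcal S}$ nonnegative, all absolutely continuous, with $q(t)=q(0)+\lambda t-(I-R^T)(\sum_\pi s_\pi(t)\pi-y(t))$, $a(t)=\lambda t$, $\sum_\pi s_\pi(t)=t$, $y(t)\le\sum_\pi s_\pi(t)\pi$, $s_\pi,y_n$ nondecreasing, and at differentiability times $\dot y_n(t)=0$ when $q_n(t)>0$ and $\dot s_\pi(t)=0$ when $\pi\cdot(I-R)f(q(t))<\max_\rho\rho\cdot(I-R)f(q(t))$. $\mathrm{FMS}(0)$ is the set of such solutions with $q(0)=0$. *)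

(* Defs.v *)
From Stdlib Require Import Reals ZArith.
Open Scope R_scope.

(** * Finite sums, vectors indexed by nat (only coordinates < N matter) *)
Fixpoint rsum (n : nat) (g : nat -> R) : R :=
  match n with O => 0 | S m => rsum m g + g m end.

Definition dotN (N : nat) (u v : nat -> R) : R := rsum N (fun n => u n * v n).

Definition IminusR (N : nat) (Rm : nat -> nat -> R) (v : nat -> R) : nat -> R :=
  fun n => v n - rsum N (fun m => Rm n m * v m).
Definition IminusRT (N : nat) (Rm : nat -> nat -> R) (v : nat -> R) : nat -> R :=
  fun n => v n - rsum N (fun m => Rm m n * v m).

Definition weight (N : nat) (Rm : nat -> nat -> R) (f : R -> R) (q : nat -> R) : nat -> R :=
  IminusR N Rm (fun n => f (q n)).

(** Schedule set S = { sched k | k < K }, schedules given by index. *)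
Definition schedule_set (N K : nat) (sched : nat -> nat -> R) : Prop :=
  (forall k n, (k < K)%nat -> (n < N)%nat -> 0 <= sched k n) /\
  (forall k k', (k < K)%nat -> (k' < K)%nat -> k <> k' ->
     exists n, (n < N)%nat /\ sched k n <> sched k' n).

Definition in_sched (N K : nat) (sched : nat -> nat -> R) (rho : nat -> R) : Prop :=
  exists k, (k < K)%nat /\ forall n, (n < N)%nat -> sched k n = rho n.

Definition is_maximizer (N K : nat) (sched : nat -> nat -> R) (Rm : nat -> nat -> R)
  (f : R -> R) (q : nat -> R) (k : nat) : Prop :=
  (k < K)%nat /\
  forall k', (k' < K)%nat ->
    dotN N (sched k') (weight N Rm f q) <= dotN N (sched k) (weight N Rm f q).

Definition routing_acyclic (N : nat) (Rm : nat -> nat -> R) : Prop :=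
  ~ exists (len : nat) (p : nat -> nat),
      (0 < len)%nat /\
      (forall m, (m < len)%nat -> (p m < N)%nat /\ Rm (p m) (p (S m)) = 1) /\
      p len = p O.

Definition routing_matrix (N : nat) (Rm : nat -> nat -> R) : Prop :=
  (forall i j, (i < N)%nat -> (j < N)%nat -> Rm i j = 0 \/ Rm i j = 1) /\
  (forall i j j', (i < N)%nat -> (j < N)%nat -> (j' < N)%nat ->
      Rm i j = 1 -> Rm i j' = 1 -> j = j') /\
  routing_acyclic N Rm.

Definition single_hop (N : nat) (Rm : nat -> nat -> R) : Prop :=
  forall i j, (i < N)%nat -> (j < N)%nat -> Rm i j = 0.

Definition f_standing (f : R -> R) : Prop :=
  (* differentiable on R_+ (one-sided at 0) *)
  (forall x, 0 < x -> exists l, derivable_pt_lim f x l) /\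
  (exists l, limit1_in (fun h => (f h - f 0) / h) (fun h => 0 < h) l 0) /\
  (forall x y, 0 <= x -> x < y -> f x < f y) /\
  f 0 = 0.

Definition scale_invariance (N K : nat) (sched : nat -> nat -> R) (Rm : nat -> nat -> R)
  (f : R -> R) : Prop :=
  forall (q : nat -> R) k, (forall n, (n < N)%nat -> 0 <= q n) ->
    is_maximizer N K sched Rm f q k ->
    forall kappa, 0 <= kappa -> is_maximizer N K sched Rm f (fun n => kappa * q n) k.

Definition multihop_closure (N K : nat) (sched : nat -> nat -> R) (Rm : nat -> nat -> R) : Prop :=
  ~ single_hop N Rm ->
  forall k (rho : nat -> R), (k < K)%nat ->
    (forall n, (n < N)%nat -> rho n = 0 \/ rho n = sched k n) ->
    in_sched N K sched rho.

(** * Discrete-time MW-f network (one sample path).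
    sig t = index of the schedule dB(t) chosen at time t. *)
Fixpoint count_sched (sig : nat -> nat) (k : nat) (tau : nat) : nat :=
  match tau with
  | O => O
  | S t => (count_sched sig k t + (if Nat.eqb (sig t) k then 1 else 0))%nat
  end.

Definition Bproc (sched : nat -> nat -> R) (sig : nat -> nat) (tau n : nat) : R :=
  rsum tau (fun t => sched (sig t) n).

Definition MW_network (N K : nat) (sched : nat -> nat -> R) (Rm : nat -> nat -> R)
  (f : R -> R) (A Q Y : nat -> nat -> R) (sig : nat -> nat) : Prop :=
  (forall n, (n < N)%nat -> A O n = 0) /\
  (forall n, (n < N)%nat -> Y O n = 0) /\
  (forall tau, (sig tau < K)%nat) /\
  (forall tau n, (n < N)%nat ->
     Y (S tau) n - Y tau n = Rmax (sched (sig tau) n - Q tau n) 0) /\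
  (forall tau n, (n < N)%nat ->
     Q tau n = Q O n + A tau n
               - IminusRT N Rm (fun m => Bproc sched sig tau m - Y tau m) n) /\
  (forall tau, is_maximizer N K sched Rm f (Q tau) (sig tau)).

Definition interp (x : nat -> R) (t : R) : R :=
  let k := Z.to_nat (Int_part t) in x k + (t - INR k) * (x (S k) - x k).

Definition scaled (r : nat) (x : nat -> R) (t : R) : R := interp x (INR r * t) / INR r.

(** * Fluid paths x = (q, a, y, s); s indexed by schedule index k < K *)
Record fluid_path := mkFluid {
  fq : R -> nat -> R;
  fa : R -> nat -> R;
  fy : R -> nat -> R;
  fs : R -> nat -> R }.

Definition scaled_path (r : nat) (A Q Y : nat -> nat -> R) (sig : nat -> nat) : fluid_path :=
  {| fq := fun t n => scaled r (fun tau => Q tau n) t;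
     fa := fun t n => scaled r (fun tau => A tau n) t;
     fy := fun t n => scaled r (fun tau => Y tau n) t;
     fs := fun t k => scaled r (fun tau => INR (count_sched sig k tau)) t |}.

Definition abs_cont_on (T : R) (g : R -> R) : Prop :=
  forall eps, 0 < eps -> exists del, 0 < del /\
    forall (m : nat) (a b : nat -> R),
      (forall i, (i < m)%nat -> 0 <= a i /\ a i <= b i /\ b i <= T) ->
      (forall i, (S i < m)%nat -> b i <= a (S i)) ->
      rsum m (fun i => b i - a i) < del ->
      rsum m (fun i => Rabs (g (b i) - g (a i))) < eps.

Definition nondecr_on (T : R) (g : R -> R) : Prop :=
  forall s t, 0 <= s -> s <= t -> t <= T -> g s <= g t.

Definition is_FMS0 (N K : nat) (sched : nat -> nat -> R) (Rm : nat -> nat -> R)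
  (f : R -> R) (lam : nat -> R) (T : R) (x : fluid_path) : Prop :=
  (forall n, (n < N)%nat -> fq x 0 n = 0) /\
  (forall n, (n < N)%nat ->
     abs_cont_on T (fun t => fq x t n) /\ abs_cont_on T (fun t => fa x t n) /\
     abs_cont_on T (fun t => fy x t n)) /\
  (forall k, (k < K)%nat -> abs_cont_on T (fun t => fs x t k)) /\
  (forall t, 0 <= t <= T ->
     (forall n, (n < N)%nat -> 0 <= fq x t n /\ 0 <= fa x t n /\ 0 <= fy x t n) /\
     (forall k, (k < K)%nat -> 0 <= fs x t k) /\
     (forall n, (n < N)%nat ->
        fq x t n = fq x 0 n + lam n * t
          - IminusRT N Rm (fun m => rsum K (fun k => fs x t k * sched k m) - fy x t m) n) /\
     (forall n, (n < N)%nat -> fa x t n = lam n * t) /\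
     rsum K (fun k => fs x t k) = t /\
     (forall n, (n < N)%nat -> fy x t n <= rsum K (fun k => fs x t k * sched k n))) /\
  (forall k, (k < K)%nat -> nondecr_on T (fun t => fs x t k)) /\
  (forall n, (n < N)%nat -> nondecr_on T (fun t => fy x t n)) /\
  (forall t, 0 < t < T ->
     (forall n l, (n < N)%nat -> derivable_pt_lim (fun u => fy x u n) t l ->
        0 < fq x t n -> l = 0) /\
     (forall k l, (k < K)%nat -> derivable_pt_lim (fun u => fs x u k) t l ->
        ~ is_maximizer N K sched Rm f (fq x t) k -> l = 0)).

(** d(g,h) < delta, with d(g,h) = sup_{t in [0,T]} |g(t) - h(t)| (max norm):
    sup < delta iff the sup is bounded by some delta' < delta. *)
Definition sup_dist_lt (N K : nat) (T : R) (g h : fluid_path) (delta : R) : Prop :=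
  exists delta', delta' < delta /\
    forall t, 0 <= t <= T ->
      (forall n, (n < N)%nat ->
         Rabs (fq g t n - fq h t n) <= delta' /\
         Rabs (fa g t n - fa h t n) <= delta' /\
         Rabs (fy g t n - fy h t n) <= delta') /\
      (forall k, (k < K)%nat -> Rabs (fs g t k - fs h t k) <= delta').

Definition dist_FMS0_lt (N K : nat) (sched : nat -> nat -> R) (Rm : nat -> nat -> R)
  (f : R -> R) (lam : nat -> R) (T : R) (g : fluid_path) (delta : R) : Prop :=
  exists h, is_FMS0 N K sched Rm f lam T h /\ sup_dist_lt N K T g h delta.

Definition sigma_algebra {Omega : Type} (F : (Omega -> Prop) -> Prop) : Prop :=
  F (fun _ => True) /\
  (forall E, F E -> F (fun w => ~ E w)) /\
  (forall E : nat -> Omega -> Prop, (forall i, F (E i)) -> F (fun w => exists i, E i w)).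

Definition probability {Omega : Type} (F : (Omega -> Prop) -> Prop)
  (P : (Omega -> Prop) -> R) : Prop :=
  (forall E, F E -> 0 <= P E) /\
  P (fun _ => True) = 1 /\
  (forall E : nat -> Omega -> Prop, (forall i, F (E i)) ->
     (forall i j, i <> j -> forall w, E i w -> E j w -> False) ->
     infinite_sum (fun i => P (E i)) (P (fun w => exists i, E i w))).

(** stationary increments: the increment process (A(s+tau)-A(s))_tau has the
    same finite-dimensional distributions as (A(tau))_tau (A(0)=0). *)
Definition stationary_increments {Omega : Type} (N : nat) (P : (Omega -> Prop) -> R)
  (A : Omega -> nat -> nat -> R) : Prop :=
  forall (s m : nat) (taus : nat -> nat) (c : nat -> nat -> R),
    P (fun w => forall i n, (i < m)%nat -> (n < N)%nat ->
                  A w (s + taus i)%nat n - A w s n <= c i n) =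
    P (fun w => forall i n, (i < m)%nat -> (n < N)%nat -> A w (taus i) n <= c i n).

(** P(event r) -> 1 as r -> oo, via inner probability (no measurability needed) *)
Definition prob_tends_to_one {Omega : Type} (F : (Omega -> Prop) -> Prop)
  (P : (Omega -> Prop) -> R) (ev : nat -> Omega -> Prop) : Prop :=
  forall eps, 0 < eps -> exists r0 : nat, forall r : nat, (r0 <= r)%nat ->
    exists E, F E /\ 1 - eps <= P E /\ forall w, E w -> ev r w.

(* Main.v *)
Require Import Defs.
From Stdlib Require Import Reals Lra Lia ZArith List Classical ClassicalEpsilon FunctionalExtensionality PropExtensionality.
Open Scope R_scope.

Lemma rsum_ext n g h : (forall i, (i < n)%nat -> g i = h i) -> rsum n g = rsum n h.
Proof. induction n; simpl; intros H; auto. rewrite IHn by (intros; apply H; lia). rewrite H by lia; auto. Qed.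

Lemma rsum_plus n g h : rsum n (fun i => g i + h i) = rsum n g + rsum n h.
Proof. induction n; simpl; [lra|rewrite IHn; lra]. Qed.
Lemma rsum_minus n g h : rsum n (fun i => g i - h i) = rsum n g - rsum n h.
Proof. induction n; simpl; [lra|rewrite IHn; lra]. Qed.
Lemma rsum_scal n c g : rsum n (fun i => c * g i) = c * rsum n g.
Proof. induction n; simpl; [lra|rewrite IHn; lra]. Qed.
Lemma rsum_zero n : rsum n (fun _ => 0) = 0.
Proof. induction n; simpl; [lra|rewrite IHn; lra]. Qed.
Lemma rsum_const n c : rsum n (fun _ => c) = INR n * c.
Proof. induction n; simpl rsum; [simpl; lra|rewrite IHn, S_INR; lra]. Qed.
Lemma rsum_le n g h : (forall i, (i < n)%nat -> g i <= h i) -> rsum n g <= rsum n h.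
Proof. induction n; simpl; intros H; [lra|]. assert (g n <= h n) by (apply H; lia).
  assert (rsum n g <= rsum n h) by (apply IHn; intros; apply H; lia). lra. Qed.
Lemma rsum_nonneg n g : (forall i, (i < n)%nat -> 0 <= g i) -> 0 <= rsum n g.
Proof. intros H. rewrite <- (rsum_zero n). apply rsum_le; auto. Qed.
Lemma rsum_abs n g : Rabs (rsum n g) <= rsum n (fun i => Rabs (g i)).
Proof. induction n; simpl. rewrite Rabs_R0; lra.
  eapply Rle_trans; [apply Rabs_triang|]. lra. Qed.
Lemma rsum_term_le n g i : (forall j, (j < n)%nat -> 0 <= g j) -> (i < n)%nat -> g i <= rsum n g.
Proof. induction n; intros H Hi; [lia|]. simpl.
  destruct (Nat.eq_dec i n).
  - subst. assert (0 <= rsum n g) by (apply rsum_nonneg; intros; apply H; lia). lra.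
  - assert (g i <= rsum n g) by (apply IHn; [intros; apply H; lia|lia]).
    assert (0 <= g n) by (apply H; lia). lra. Qed.
Lemma rsum_indic K k0 c : (k0 < K)%nat ->
  rsum K (fun k => if Nat.eqb k0 k then c k else 0) = c k0.
Proof. induction K; intros H; [lia|]. simpl.
  destruct (Nat.eq_dec k0 K).
  - subst. rewrite Nat.eqb_refl.
    rewrite (rsum_ext K _ (fun _ => 0)). rewrite rsum_zero; lra.
    intros i Hi. destruct (Nat.eqb_spec K i); [lia|auto].
  - rewrite IHK by lia. destruct (Nat.eqb_spec k0 K); [lia|lra]. Qed.

Definition fl (t : R) : nat := Z.to_nat (Int_part t).

Lemma fl_spec t : 0 <= t -> INR (fl t) <= t < INR (fl t) + 1.
Proof. intros Ht. destruct (base_Int_part t) as [H1 H2].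
  assert (Hz : (0 <= Int_part t)%Z).
  { assert (IZR (Int_part t) > -1) by lra. apply lt_IZR in H. lia. }
  unfold fl. rewrite INR_IZR_INZ, Z2Nat.id by exact Hz. lra. Qed.

Lemma fl_unique t k : INR k <= t < INR k + 1 -> fl t = k.
Proof. intros [H1 H2]. assert (Ht : 0 <= t) by (pose proof (pos_INR k); lra).
  destruct (fl_spec t Ht) as [H3 H4].
  assert (A1 : (k < S (fl t))%nat) by (apply INR_lt; rewrite S_INR; lra).
  assert (A2 : (fl t < S k)%nat) by (apply INR_lt; rewrite S_INR; lra). lia. Qed.

Lemma fl_INR n : fl (INR n) = n.
Proof. apply fl_unique. lra. Qed.

Lemma interp_nat x n : interp x (INR n) = x n.
Proof. unfold interp. change (Z.to_nat (Int_part (INR n))) with (fl (INR n)).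
  rewrite fl_INR. lra. Qed.

Lemma interp_eq x t : interp x t = x (fl t) + (t - INR (fl t)) * (x (S (fl t)) - x (fl t)).
Proof. reflexivity. Qed.

Lemma interp_plus x y t : interp (fun k => x k + y k) t = interp x t + interp y t.
Proof. rewrite !interp_eq. ring. Qed.
Lemma interp_minus x y t : interp (fun k => x k - y k) t = interp x t - interp y t.
Proof. rewrite !interp_eq. ring. Qed.
Lemma interp_scal c x t : interp (fun k => c * x k) t = c * interp x t.
Proof. rewrite !interp_eq. ring. Qed.
Lemma interp_const c t : interp (fun _ => c) t = c.
Proof. rewrite !interp_eq. ring. Qed.
Lemma interp_id t : 0 <= t -> interp INR t = t.
Proof. intros. rewrite interp_eq, S_INR. ring. Qed.
Lemma interp_ext x y t : (forall k, x k = y k) -> interp x t = interp y t.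
Proof. intros H. rewrite !interp_eq, !H. auto. Qed.
Lemma interp_rsum M F t : interp (fun k => rsum M (fun i => F i k)) t = rsum M (fun i => interp (F i) t).
Proof. induction M; simpl. apply interp_const. rewrite interp_plus, IHM. auto. Qed.

Lemma interp_between x t lo hi : 0 <= t ->
  lo <= x (fl t) <= hi -> lo <= x (S (fl t)) <= hi -> lo <= interp x t <= hi.
Proof. intros Ht H1 H2. destruct (fl_spec t Ht). rewrite interp_eq.
  set (th := t - INR (fl t)). assert (0 <= th < 1) by (unfold th; lra).
  replace (x (fl t) + th * (x (S (fl t)) - x (fl t))) with ((1 - th) * x (fl t) + th * x (S (fl t))) by ring.
  split; nra. Qed.

Section Mono.
Variable x : nat -> R.
Variable c : R.
Hypothesis Hinc : forall k, 0 <= x (S k) - x k <= c.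

Lemma mono_nat i j : (i <= j)%nat -> 0 <= x j - x i <= c * (INR j - INR i).
Proof. induction 1. lra. rewrite S_INR. specialize (Hinc m). lra. Qed.

Lemma mono_L2 t i : 0 <= t -> INR i <= t -> 0 <= interp x t - x i <= c * (t - INR i).
Proof. intros Ht Hi. destruct (fl_spec t Ht) as [H1 H2].
  assert (Hk : (i <= fl t)%nat). { assert (i < S (fl t))%nat by (apply INR_lt; rewrite S_INR; lra). lia. }
  pose proof (mono_nat _ _ Hk). specialize (Hinc (fl t)). rewrite interp_eq.
  set (k := fl t) in *. set (th := t - INR k).
  assert (0 <= th < 1) by (unfold th; lra).
  assert (0 <= c) by lra.
  replace (c * (t - INR i)) with (c * (INR k - INR i) + c * th) by (unfold th; ring).
  split; nra. Qed.

Lemma mono_L3 t j : 0 <= t -> t <= INR j -> 0 <= x j - interp x t <= c * (INR j - t).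
Proof. intros Ht Hj. destruct (fl_spec t Ht) as [H1 H2].
  set (k := fl t) in *.
  assert (Hk : (k <= j)%nat) by (apply INR_le; lra).
  assert (0 <= c) by (specialize (Hinc 0%nat); lra).
  destruct (Nat.eq_dec k j).
  - subst j. assert (t = INR k) by lra. rewrite H0. rewrite interp_nat. lra.
  - assert (Hk1 : (S k <= j)%nat) by lia. pose proof (mono_nat _ _ Hk1). rewrite S_INR in H0.
    specialize (Hinc k). rewrite interp_eq. fold k.
    set (th := t - INR k). assert (0 <= th < 1) by (unfold th; lra).
    replace (c * (INR j - t)) with (c * (INR j - (INR k + 1)) + c * (1 - th)) by (unfold th; ring).
    split; nra. Qed.

Lemma interp_mono t u : 0 <= t -> t <= u -> 0 <= interp x u - interp x t <= c * (u - t).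
Proof. intros Ht Htu. destruct (fl_spec t Ht) as [H1 H2].
  assert (0 <= c) by (specialize (Hinc 0%nat); lra).
  destruct (Rlt_le_dec u (INR (fl t) + 1)).
  - assert (fl u = fl t) by (apply fl_unique; lra).
    rewrite !(interp_eq x). rewrite H0. specialize (Hinc (fl t)). split; nra.
  - pose proof (mono_L2 u (S (fl t))) as A. rewrite S_INR in A. specialize (A ltac:(lra) r).
    pose proof (mono_L3 t (S (fl t))) as B. rewrite S_INR in B. specialize (B Ht ltac:(lra)).
    lra. Qed.
End Mono.

Lemma Rabs_le_inv' a b : Rabs a <= b -> - b <= a <= b.
Proof. intros H. pose proof (Rle_abs a). pose proof (Rle_abs (- a)). rewrite Rabs_Ropp in H1. lra. Qed.
Lemma Rabs_lt_inv' a b : Rabs a < b -> - b < a < b.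
Proof. intros H. pose proof (Rle_abs a). pose proof (Rle_abs (- a)). rewrite Rabs_Ropp in H1. lra. Qed.

Definition lipT (T : R) (g : R -> R) := exists L, 0 <= L /\
  forall s t, 0 <= s <= T -> 0 <= t <= T -> Rabs (g t - g s) <= L * Rabs (t - s).

Lemma lip_plus T g h : lipT T g -> lipT T h -> lipT T (fun t => g t + h t).
Proof. intros [L1 [H1 G1]] [L2 [H2 G2]]. exists (L1 + L2). split; [lra|]. intros s t Hs Ht.
  specialize (G1 s t Hs Ht). specialize (G2 s t Hs Ht).
  replace (g t + h t - (g s + h s)) with ((g t - g s) + (h t - h s)) by ring.
  eapply Rle_trans; [apply Rabs_triang|]. lra. Qed.
Lemma lip_scal T c g : lipT T g -> lipT T (fun t => c * g t).
Proof. intros [L1 [H1 G1]]. exists (Rabs c * L1). split. pose proof (Rabs_pos c); nra.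
  intros s t Hs Ht. specialize (G1 s t Hs Ht).
  replace (c * g t - c * g s) with (c * (g t - g s)) by ring. rewrite Rabs_mult.
  pose proof (Rabs_pos c). rewrite Rmult_assoc. apply Rmult_le_compat_l; auto. Qed.
Lemma lip_minus T g h : lipT T g -> lipT T h -> lipT T (fun t => g t - h t).
Proof. intros A B. pose proof (lip_plus T g (fun t => -1 * h t) A (lip_scal T (-1) h B)) as C.
  destruct C as [L [HL G]]. exists L. split; auto. intros s t Hs Ht. specialize (G s t Hs Ht).
  replace (g t - h t - (g s - h s)) with (g t + -1 * h t - (g s + -1 * h s)) by ring. auto. Qed.
Lemma lip_const T c : lipT T (fun _ => c).
Proof. exists 0. split; [lra|]. intros. replace (c - c) with 0 by ring. rewrite Rabs_R0. lra. Qed.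
Lemma lip_lin T c : lipT T (fun t => c * t).
Proof. exists (Rabs c). split. apply Rabs_pos. intros.
  replace (c * t - c * s) with (c * (t - s)) by ring. rewrite Rabs_mult. lra. Qed.
Lemma lip_rsum T M (G : nat -> R -> R) : (forall i, (i < M)%nat -> lipT T (G i)) ->
  lipT T (fun t => rsum M (fun i => G i t)).
Proof. induction M; intros H; simpl. apply lip_const.
  apply lip_plus. apply IHM; intros; apply H; lia. apply H; lia. Qed.
Lemma lip_ext T g h : (forall t, 0 <= t <= T -> g t = h t) -> lipT T g -> lipT T h.
Proof. intros E [L [HL G]]. exists L. split; auto. intros s t Hs Ht. rewrite <- !E by auto. auto. Qed.

Lemma abs_cont_lip T g : lipT T g -> abs_cont_on T g.
Proof. intros [L [HL G]] eps Heps. exists (eps / (L + 1)). split.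
  apply Rdiv_lt_0_compat; lra.
  intros m a b Hab Hord Hs.
  assert (Hle : rsum m (fun i => Rabs (g (b i) - g (a i))) <= L * rsum m (fun i => b i - a i)).
  { rewrite <- rsum_scal. apply rsum_le. intros i Hi. destruct (Hab i Hi) as [A1 [A2 A3]].
    eapply Rle_trans. apply G; lra. rewrite Rabs_right by lra. lra. }
  assert (L * rsum m (fun i => b i - a i) <= L * (eps / (L+1))) by (apply Rmult_le_compat_l; lra).
  assert (L * (eps / (L+1)) < eps).
  { unfold Rdiv. replace (L * (eps * / (L+1))) with (eps * (L / (L+1))) by (field; lra).
    assert (L / (L+1) < 1) by (apply (Rmult_lt_reg_r (L+1)); [lra|]; unfold Rdiv; rewrite Rmult_assoc, Rinv_l by lra; lra). nra. }
  lra. Qed.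

Lemma deriv_loc_const g t0 l rho : 0 < rho ->
  (forall u, Rabs (u - t0) < rho -> g u = g t0) -> derivable_pt_lim g t0 l -> l = 0.
Proof. intros Hr Hc Hd. destruct (Req_dec l 0) as [|Hl]; auto. exfalso.
  assert (Hal : 0 < Rabs l) by (apply Rabs_pos_lt; auto).
  destruct (Hd (Rabs l / 2) ltac:(lra)) as [del Hdel].
  set (h := Rmin del rho / 2).
  assert (Hm : 0 < Rmin del rho) by (apply Rmin_pos; [apply (cond_pos del)|lra]).
  assert (0 < h) by (unfold h; lra).
  assert (Rmin del rho <= del) by apply Rmin_l. assert (Rmin del rho <= rho) by apply Rmin_r.
  specialize (Hdel h ltac:(lra) ltac:(rewrite Rabs_right; unfold h; lra)).
  rewrite (Hc (t0 + h)) in Hdel by (replace (t0 + h - t0) with h by ring; rewrite Rabs_right; unfold h; lra).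
  replace ((g t0 - g t0) / h - l) with (- l) in Hdel by (field; lra).
  rewrite Rabs_Ropp in Hdel. lra. Qed.

Lemma f_cont f : f_standing f -> forall x, 0 <= x -> forall eps, 0 < eps ->
  exists rho, 0 < rho /\ forall y, 0 <= y -> Rabs (y - x) < rho -> Rabs (f y - f x) < eps.
Proof. intros [Hd [H0 [Hinc Hf0]]] x Hx eps Heps.
  destruct Hx as [Hx|Hx].
  - destruct (Hd x Hx) as [l Hl]. destruct (Hl 1 ltac:(lra)) as [del Hdel].
    exists (Rmin del (eps / (Rabs l + 1))). split.
    apply Rmin_pos. apply (cond_pos del). apply Rdiv_lt_0_compat; [lra|pose proof (Rabs_pos l); lra].
    intros y Hy Hyx. pose proof (Rmin_l del (eps / (Rabs l + 1))). pose proof (Rmin_r del (eps / (Rabs l + 1))).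
    destruct (Req_dec y x) as [->|Hne]. replace (f x - f x) with 0 by ring; rewrite Rabs_R0; lra.
    specialize (Hdel (y - x) ltac:(lra) ltac:(lra)). replace (x + (y - x)) with y in Hdel by ring.
    assert (Hyx0 : 0 < Rabs (y - x)) by (apply Rabs_pos_lt; lra).
    assert (Q1 : Rabs ((f y - f x) / (y - x)) < Rabs l + 1).
    { pose proof (Rabs_triang_inv ((f y - f x) / (y - x)) l). lra. }
    unfold Rdiv in Q1. rewrite Rabs_mult, Rabs_inv in Q1.
    assert (Q2 : Rabs (f y - f x) < (Rabs l + 1) * Rabs (y - x)).
    { apply (Rmult_lt_compat_r (Rabs (y - x))) in Q1; auto.
      rewrite Rmult_assoc, Rinv_l in Q1 by lra. lra. }
    assert (Q3 : (Rabs l + 1) * Rabs (y - x) <= (Rabs l + 1) * (eps / (Rabs l + 1))).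
    { apply Rmult_le_compat_l. pose proof (Rabs_pos l); lra. lra. }
    replace ((Rabs l + 1) * (eps / (Rabs l + 1))) with eps in Q3 by (field; pose proof (Rabs_pos l); lra).
    lra.
  - subst x. destruct H0 as [l Hl]. destruct (Hl 1 ltac:(lra)) as [del [Hdp Hdel]].
    exists (Rmin del (eps / (Rabs l + 1))). split.
    apply Rmin_pos. lra. apply Rdiv_lt_0_compat; [lra|pose proof (Rabs_pos l); lra].
    intros y Hy Hyx. pose proof (Rmin_l del (eps / (Rabs l + 1))). pose proof (Rmin_r del (eps / (Rabs l + 1))).
    destruct Hy as [Hy|Hy]; [|subst y; replace (f 0 - f 0) with 0 by ring; rewrite Rabs_R0; lra].
    specialize (Hdel y). simpl in Hdel. unfold Rdist in Hdel.
    assert (Hyd : Rabs (y - 0) < del) by lra.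
    specialize (Hdel (conj Hy Hyd)).
    rewrite Rminus_0_r in Hyx.
    assert (Q1 : Rabs ((f y - f 0) / y) < Rabs l + 1).
    { pose proof (Rabs_triang_inv ((f y - f 0) / y) l). lra. }
    unfold Rdiv in Q1. rewrite Rabs_mult, Rabs_inv in Q1.
    assert (Q2 : Rabs (f y - f 0) < (Rabs l + 1) * Rabs y).
    { assert (0 < Rabs y) by (rewrite Rabs_right; lra).
      apply (Rmult_lt_compat_r (Rabs y)) in Q1; auto.
      rewrite Rmult_assoc, Rinv_l in Q1 by lra. lra. }
    assert (Q3 : (Rabs l + 1) * Rabs y <= (Rabs l + 1) * (eps / (Rabs l + 1))).
    { apply Rmult_le_compat_l. pose proof (Rabs_pos l); lra. lra. }
    replace ((Rabs l + 1) * (eps / (Rabs l + 1))) with eps in Q3 by (field; pose proof (Rabs_pos l); lra).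
    lra. Qed.

Lemma nat_above x : exists n : nat, x < INR n.
Proof. destruct (archimed x) as [H1 H2].
  destruct (Z_le_gt_dec 0 (up x)).
  - exists (Z.to_nat (up x)). rewrite INR_IZR_INZ, Z2Nat.id by auto. lra.
  - exists O. simpl. apply Z.gt_lt in g. apply IZR_lt in g. lra. Qed.

Lemma inv_small eps : 0 < eps -> exists J : nat, forall j, (J <= j)%nat -> / (INR j + 1) < eps.
Proof. intros He. destruct (nat_above (/ eps)) as [J HJ]. exists J. intros j Hj.
  apply le_INR in Hj. assert (0 < / eps) by (apply Rinv_0_lt_compat; auto).
  rewrite <- (Rinv_inv eps). apply Rinv_lt_contravar. nra. lra. Qed.

Lemma cv_subseq u l (psi : nat -> nat) : Un_cv u l -> (forall n, (n <= psi n)%nat) -> Un_cv (fun n => u (psi n)) l.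
Proof. intros H Hp eps He. destruct (H eps He) as [N HN]. exists N. intros n Hn. apply HN.
  specialize (Hp n). lia. Qed.

Lemma cv_far u l (rho : nat -> nat) (M : nat) : Un_cv u l -> (forall n, (M <= n)%nat -> (n <= rho n)%nat) ->
  Un_cv (fun n => u (rho n)) l.
Proof. intros H Hp eps He. destruct (H eps He) as [N HN]. exists (max N M). intros n Hn. apply HN.
  specialize (Hp n ltac:(lia)). lia. Qed.

Lemma BW1 (u : nat -> R) B : (forall n, Rabs (u n) <= B) ->
  exists psi : nat -> nat, (forall n, (n <= psi n)%nat) /\ exists l, Un_cv (fun n => u (psi n)) l.
Proof. intros HB.
  set (E := fun x => forall n, exists m, (n <= m)%nat /\ x <= u m).
  assert (Hne : exists x, E x). { exists (-B). intros n. exists n. split; auto. specialize (HB n).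
    apply Rabs_le_inv' in HB; lra. }
  assert (Hb : bound E). { exists B. intros x Hx. destruct (Hx O) as [m [_ Hm]]. specialize (HB m).
    apply Rabs_le_inv' in HB; lra. }
  destruct (completeness E Hb Hne) as [L [HL1 HL2]].
  assert (Hcl : forall eps, 0 < eps -> forall n, exists m, (n <= m)%nat /\ Rabs (u m - L) < eps).
  { intros eps He n.
    assert (A : exists x, E x /\ L - eps < x).
    { apply NNPP. intros Hn. assert (L <= L - eps); [|lra]. apply HL2. intros x Hx.
      destruct (Rle_dec x (L - eps)); auto. exfalso. apply Hn. exists x. split; auto; lra. }
    destruct A as [x [Ex Hx]].
    assert (Bn : ~ E (L + eps / 2)). { intros Hc. specialize (HL1 _ Hc). lra. }
    unfold E in Bn. apply not_all_ex_not in Bn. destruct Bn as [n0 Hn0].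
    destruct (Ex (max n n0)) as [m [Hm1 Hm2]]. exists m. split; [lia|].
    assert (u m < L + eps / 2). { destruct (Rlt_le_dec (u m) (L + eps/2)); auto. exfalso. apply Hn0. exists m.
      split; [lia|lra]. }
    apply Rabs_def1; lra. }
  assert (Hc2 : forall j n : nat, exists m, (n <= m)%nat /\ Rabs (u m - L) < / (INR j + 1)).
  { intros j n. apply Hcl. apply Rinv_0_lt_compat. pose proof (pos_INR j); lra. }
  set (psi := fun j => proj1_sig (constructive_indefinite_description _ (Hc2 j j))).
  exists psi. split.
  - intros n. unfold psi. destruct (constructive_indefinite_description _ _) as [m [Hm Hm0]]. simpl. auto.
  - exists L. intros eps He. destruct (inv_small eps He) as [J HJ]. exists J. intros n Hn.
    unfold psi. destruct (constructive_indefinite_description _ _) as [m [Hm0 Hm]]. simpl.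
    unfold Rdist. specialize (HJ n Hn). lra. Qed.

Lemma BWlist {X : Type} (v : X -> nat -> R) B (l : list X) (phi : nat -> nat) :
  (forall x, In x l -> forall n, Rabs (v x n) <= B) ->
  exists psi : nat -> nat, (forall n, (n <= psi n)%nat) /\
    forall x, In x l -> exists L, Un_cv (fun n => v x (phi (psi n))) L.
Proof. induction l as [|x0 l IH]; intros HB.
  - exists (fun n => n). split; auto. intros x [].
  - destruct IH as [psi1 [Hp1 Hc1]]. intros; apply HB; simpl; auto.
    destruct (BW1 (fun n => v x0 (phi (psi1 n))) B) as [psi2 [Hp2 [L2 HL2]]].
    intros; apply HB; simpl; auto.
    exists (fun n => psi1 (psi2 n)). split. intros n. specialize (Hp2 n). specialize (Hp1 (psi2 n)). lia.
    intros x [<-|Hx]. exists L2. auto.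
    destruct (Hc1 x Hx) as [L HL]. exists L.
    apply (cv_subseq (fun n => v x (phi (psi1 n))) L psi2 HL Hp2). Qed.

Lemma diagonal {X : Type} (v : X -> nat -> R) B (Ls : nat -> list X) :
  (forall M x, In x (Ls M) -> forall n, Rabs (v x n) <= B) ->
  exists d : nat -> nat, (forall n, (n <= d n)%nat) /\
    forall M x, In x (Ls M) -> exists L, Un_cv (fun n => v x (d n)) L.
Proof. intros HB.
  assert (Hex : forall (phi : nat -> nat) M, exists psi : nat -> nat, (forall n, (n <= psi n)%nat) /\
    forall x, In x (Ls M) -> exists L, Un_cv (fun n => v x (phi (psi n))) L).
  { intros phi M. apply (BWlist v B). apply HB. }
  set (ext := fun phi M => proj1_sig (constructive_indefinite_description _ (Hex phi M))).
  assert (Hext : forall phi M, (forall n, (n <= ext phi M n)%nat) /\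
    forall x, In x (Ls M) -> exists L, Un_cv (fun n => v x (phi (ext phi M n))) L).
  { intros phi M. unfold ext. destruct (constructive_indefinite_description _ _). simpl. auto. }
  set (Phi := fix Phi (M : nat) : nat -> nat := match M with
      | O => ext (fun n => n) O
      | S M' => fun n => Phi M' (ext (Phi M') (S M') n) end).
  assert (P1 : forall M x, In x (Ls M) -> exists L, Un_cv (fun n => v x (Phi M n)) L).
  { intros [|M] x Hx; simpl. apply (proj2 (Hext (fun n => n) O)); auto.
    apply (proj2 (Hext (Phi M) (S M))); auto. }
  assert (P3 : forall M n, (n <= Phi M n)%nat).
  { induction M; intros n; simpl. apply (proj1 (Hext _ O)).
    specialize (IHM (ext (Phi M) (S M) n)). pose proof (proj1 (Hext (Phi M) (S M)) n). lia. }
  assert (P2 : forall M j, (M <= j)%nat -> exists rho : nat -> nat, (forall n, (n <= rho n)%nat) /\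
      forall n, Phi j n = Phi M (rho n)).
  { intros M j Hj. induction Hj.
    - exists (fun n => n). split; auto.
    - destruct IHHj as [rho [Hr1 Hr2]]. exists (fun n => rho (ext (Phi m) (S m) n)). split.
      intros n. specialize (Hr1 (ext (Phi m) (S m) n)). pose proof (proj1 (Hext (Phi m) (S m)) n). lia.
      intros n. simpl. apply Hr2. }
  exists (fun n => Phi n n). split. intros n; apply P3.
  intros M x Hx. destruct (P1 M x Hx) as [L HL]. exists L.
  intros eps He. destruct (HL eps He) as [N HN]. exists (max N M). intros n Hn.
  destruct (P2 M n ltac:(lia)) as [rho [Hr1 Hr2]]. rewrite Hr2. apply HN. specialize (Hr1 n). lia. Qed.

Lemma list_uniform {X : Type} (l : list X) (P : X -> nat -> Prop) :
  (forall x J J', (J <= J')%nat -> P x J -> P x J') ->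
  (forall x, In x l -> exists J, P x J) -> exists J, forall x, In x l -> P x J.
Proof. intros Hm. induction l as [|x0 l IH]; intros H.
  - exists O. intros x [].
  - destruct IH as [J1 HJ1]. intros; apply H; simpl; auto.
    destruct (H x0 ltac:(simpl; auto)) as [J0 HJ0]. exists (max J0 J1).
    intros x [<-|Hx]. apply (Hm _ J0); auto; lia. apply (Hm _ J1); auto; lia. Qed.

Lemma grid_near T M t : 0 < T -> 0 <= t <= T ->
  exists a, (a <= M)%nat /\ Rabs (t - T * INR a / INR (S M)) <= T / INR (S M).
Proof. intros HT Ht. assert (HM : 0 < INR (S M)) by (apply lt_0_INR; lia).
  set (z := t * INR (S M) / T). assert (Hz : 0 <= z) by (unfold z; apply Rmult_le_pos; [apply Rmult_le_pos; lra| left; apply Rinv_0_lt_compat; lra]).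
  assert (Hz2 : z <= INR (S M)). { unfold z. unfold Rdiv. apply (Rmult_le_reg_r T); auto.
    rewrite Rmult_assoc, Rinv_l by lra. nra. }
  destruct (fl_spec z Hz) as [A1 A2].
  assert (Htz : t = T * z / INR (S M)) by (unfold z; field; lra).
  destruct (le_lt_dec (fl z) M) as [Hl|Hl].
  - exists (fl z). split; auto. rewrite Htz.
    replace (T * z / INR (S M) - T * INR (fl z) / INR (S M)) with ((z - INR (fl z)) * (T / INR (S M))) by (field; lra).
    rewrite Rabs_mult, (Rabs_right (T / INR (S M))) by (left; apply Rdiv_lt_0_compat; lra).
    rewrite Rabs_right by lra. assert (0 < T / INR (S M)) by (apply Rdiv_lt_0_compat; lra). nra.
  - exists M. split; auto. assert (INR (S M) <= INR (fl z)) by (apply le_INR; lia).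
    assert (z = INR (S M)) by lra. rewrite Htz, H0. rewrite S_INR at 1.
    replace (T * (INR M + 1) / INR (S M) - T * INR M / INR (S M)) with (T / INR (S M)) by (field; lra).
    rewrite Rabs_right; [lra|]. left; apply Rdiv_lt_0_compat; lra. Qed.

Lemma lim_abs_le u l a eps (N : nat) : Un_cv u l -> (forall n, (N <= n)%nat -> Rabs (a - u n) <= eps) ->
  Rabs (a - l) <= eps.
Proof. intros Hu Hb. destruct (Rle_dec (Rabs (a - l)) eps) as [|Hn]; auto. exfalso.
  set (e := Rabs (a - l) - eps). assert (0 < e) by (unfold e; lra).
  destruct (Hu e H) as [N2 HN2]. specialize (HN2 (max N N2) ltac:(lia)). specialize (Hb (max N N2) ltac:(lia)).
  unfold Rdist in HN2. pose proof (Rabs_triang (a - u (max N N2)) (u (max N N2) - l)).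
  replace (a - u (max N N2) + (u (max N N2) - l)) with (a - l) in H0 by ring. unfold e in HN2. lra. Qed.

Lemma AA (T L B : R) (D : nat) (g : nat -> nat -> R -> R) : 0 < T -> 0 <= L ->
  (forall j c t, (c < D)%nat -> 0 <= t <= T -> Rabs (g j c t) <= B) ->
  (forall j c s t, (c < D)%nat -> 0 <= s <= T -> 0 <= t <= T -> Rabs (g j c t - g j c s) <= L * Rabs (t - s)) ->
  exists d : nat -> nat, (forall n, (n <= d n)%nat) /\ exists G : nat -> R -> R,
    forall c, (c < D)%nat -> forall eps, 0 < eps -> exists J, forall j, (J <= j)%nat ->
      forall t, 0 <= t <= T -> Rabs (g (d j) c t - G c t) <= eps.
Proof. intros HT HL HB HLip.
  set (v := fun (x : (nat * nat) * nat) j => g j (fst (fst x)) (T * INR (snd (fst x)) / INR (S (snd x)))).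
  set (Ls := fun M => map (fun ca => (ca, M)) (list_prod (seq 0 D) (seq 0 (S M)))).
  assert (Hin : forall M x, In x (Ls M) -> exists c a, x = ((c, a), M) /\ (c < D)%nat /\ (a <= M)%nat).
  { intros M x Hx. unfold Ls in Hx. apply in_map_iff in Hx. destruct Hx as [[c a] [<- Hca]].
    apply in_prod_iff in Hca. destruct Hca as [H1 H2]. apply in_seq in H1. apply in_seq in H2.
    exists c, a. repeat split; lia. }
  assert (Hin2 : forall M c a, (c < D)%nat -> (a <= M)%nat -> In ((c, a), M) (Ls M)).
  { intros M c a Hc Ha. unfold Ls. apply in_map_iff. exists (c, a). split; auto.
    apply in_prod_iff. split; apply in_seq; lia. }
  assert (Hpt : forall M a, (a <= M)%nat -> 0 <= T * INR a / INR (S M) <= T).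
  { intros M a Ha. assert (0 < INR (S M)) by (apply lt_0_INR; lia).
    assert (INR a <= INR (S M)) by (apply le_INR; lia). pose proof (pos_INR a). split.
    apply Rmult_le_pos; [nra| left; apply Rinv_0_lt_compat; lra].
    unfold Rdiv. apply (Rmult_le_reg_r (INR (S M))); auto. rewrite Rmult_assoc, Rinv_l by lra. nra. }
  destruct (diagonal v B Ls) as [d [Hd Hconv]].
  { intros M x Hx n. destruct (Hin M x Hx) as [c [a [-> [Hc Ha]]]]. unfold v; simpl. apply HB; [auto|apply Hpt; auto]. }
  exists d. split; auto.
  assert (HUC : forall eps, 0 < eps -> exists J, forall j j', (J <= j)%nat -> (J <= j')%nat ->
     forall c t, (c < D)%nat -> 0 <= t <= T -> Rabs (g (d j) c t - g (d j') c t) <= eps).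
  { intros eps He. destruct (nat_above (3 * L * T / eps)) as [M HM].
    assert (HSM : 0 < INR (S M)) by (apply lt_0_INR; lia).
    assert (HLT : L * (T / INR (S M)) <= eps / 3).
    { rewrite S_INR in *. unfold Rdiv. apply (Rmult_le_reg_r (INR M + 1)); [lra|].
      replace (L * (T * / (INR M + 1)) * (INR M + 1)) with (L * T) by (field; lra).
      unfold Rdiv in HM. apply (Rmult_lt_compat_r eps) in HM; auto.
      replace (3 * L * T * / eps * eps) with (3 * L * T) in HM by (field; lra). nra. }
    destruct (list_uniform (Ls M) (fun x J => forall j j', (J <= j)%nat -> (J <= j')%nat ->
        Rabs (v x (d j) - v x (d j')) < eps / 3)) as [J HJ].
    { intros x J J' HJJ H j j' Hj Hj'. apply H; lia. }
    { intros x Hx. destruct (Hconv M x Hx) as [Lx HLx]. destruct (HLx (eps / 6) ltac:(lra)) as [N HN].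
      exists N. intros j j' Hj Hj'. pose proof (HN j Hj) as A. pose proof (HN j' Hj') as B1.
      unfold Rdist in A, B1. pose proof (Rabs_triang (v x (d j) - Lx) (Lx - v x (d j'))) as C.
      replace (v x (d j) - Lx + (Lx - v x (d j'))) with (v x (d j) - v x (d j')) in C by ring.
      rewrite Rabs_minus_sym in B1. lra. }
    exists J. intros j j' Hj Hj' c t Hc Ht.
    destruct (grid_near T M t HT Ht) as [a [Ha Hat]].
    specialize (HJ _ (Hin2 M c a Hc Ha) j j' Hj Hj'). unfold v in HJ; cbn [fst snd] in HJ.
    set (p := T * INR a / INR (S M)) in *.
    pose proof (HLip (d j) c p t Hc (Hpt M a Ha) Ht) as E1.
    pose proof (HLip (d j') c p t Hc (Hpt M a Ha) Ht) as E2.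
    assert (E3 : L * Rabs (t - p) <= eps / 3). { apply Rle_trans with (L * (T / INR (S M))); auto. apply Rmult_le_compat_l; auto. }
    replace (g (d j) c t - g (d j') c t) with ((g (d j) c t - g (d j) c p) + (g (d j) c p - g (d j') c p) + - (g (d j') c t - g (d j') c p)) by ring.
    eapply Rle_trans. apply Rabs_triang. rewrite Rabs_Ropp.
    eapply Rle_trans. apply Rplus_le_compat_r. apply Rabs_triang. idtac. lra. }
  exists (fun c t => epsilon (inhabits 0) (fun l => Un_cv (fun j => g (d j) c t) l)).
  intros c Hc eps He. destruct (HUC eps He) as [J HJ]. exists J. intros j Hj t Ht.
  assert (Hex : exists l, Un_cv (fun j => g (d j) c t) l).
  { destruct (R_complete (fun j => g (d j) c t)) as [l Hl]; [|exists l; auto].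
    intros e He'. destruct (HUC (e/2) ltac:(lra)) as [J' HJ']. exists J'. intros n m Hn Hm.
    unfold Rdist. specialize (HJ' n m Hn Hm c t Hc Ht). lra. }
  pose proof (epsilon_spec (inhabits 0) _ Hex) as Hl.
  apply (lim_abs_le _ _ _ _ J Hl). intros n Hn. apply HJ; auto. Qed.

Lemma scaled_eq r x t : scaled r x t = interp x (INR r * t) / INR r.
Proof. reflexivity. Qed.
Lemma scaled_plus r x y t : scaled r (fun k => x k + y k) t = scaled r x t + scaled r y t.
Proof. unfold scaled. rewrite interp_plus. unfold Rdiv. ring. Qed.
Lemma scaled_minus r x y t : scaled r (fun k => x k - y k) t = scaled r x t - scaled r y t.
Proof. unfold scaled. rewrite interp_minus. unfold Rdiv. ring. Qed.
Lemma scaled_scal r c x t : scaled r (fun k => c * x k) t = c * scaled r x t.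
Proof. unfold scaled. rewrite interp_scal. unfold Rdiv. ring. Qed.
Lemma scaled_mulr r c x t : scaled r (fun k => x k * c) t = scaled r x t * c.
Proof. unfold scaled. rewrite (interp_ext _ (fun k => c * x k)) by (intros; ring). rewrite interp_scal. unfold Rdiv. ring. Qed.
Lemma scaled_const r c t : scaled r (fun _ => c) t = c / INR r.
Proof. unfold scaled. rewrite interp_const. auto. Qed.
Lemma scaled_ext r x y t : (forall k, x k = y k) -> scaled r x t = scaled r y t.
Proof. intros H. unfold scaled. rewrite (interp_ext x y) by auto. auto. Qed.
Lemma scaled_rsum r M F t : scaled r (fun k => rsum M (fun i => F i k)) t = rsum M (fun i => scaled r (F i) t).
Proof. induction M; simpl. rewrite scaled_const. unfold Rdiv; ring.
  rewrite scaled_plus, IHM. auto. Qed.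
Lemma scaled_grid r x tau : (0 < r)%nat -> scaled r x (INR tau / INR r) = x tau / INR r.
Proof. intros Hr. unfold scaled. assert (0 < INR r) by (apply lt_0_INR; auto).
  replace (INR r * (INR tau / INR r)) with (INR tau) by (field; lra). rewrite interp_nat. auto. Qed.
Lemma scaled_zero r x : scaled r x 0 = x O / INR r.
Proof. unfold scaled. rewrite Rmult_0_r. replace 0 with (INR 0) by auto. rewrite interp_nat. auto. Qed.
Lemma scaled_id r t : (0 < r)%nat -> 0 <= t -> scaled r INR t = t.
Proof. intros Hr Ht. assert (0 < INR r) by (apply lt_0_INR; auto). unfold scaled. rewrite interp_id by nra.
  field; lra. Qed.

Lemma scaled_mono r x c : (0 < r)%nat -> (forall k, 0 <= x (S k) - x k <= c) ->
  forall t u, 0 <= t -> t <= u -> 0 <= scaled r x u - scaled r x t <= c * (u - t).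
Proof. intros Hr Hinc t u Ht Htu. assert (0 < INR r) by (apply lt_0_INR; auto).
  pose proof (interp_mono x c Hinc (INR r * t) (INR r * u) ltac:(nra) ltac:(nra)) as H1.
  unfold scaled. replace (interp x (INR r * u) / INR r - interp x (INR r * t) / INR r)
    with ((interp x (INR r * u) - interp x (INR r * t)) / INR r) by (field; lra).
  split. apply Rmult_le_pos; [lra|left; apply Rinv_0_lt_compat; lra].
  unfold Rdiv. apply (Rmult_le_reg_r (INR r)); auto. rewrite Rmult_assoc, Rinv_l by lra. nra. Qed.

Lemma scaled_lip r x c : (0 < r)%nat -> (forall k, 0 <= x (S k) - x k <= c) ->
  forall t u, 0 <= t -> 0 <= u -> Rabs (scaled r x u - scaled r x t) <= c * Rabs (u - t).
Proof. intros Hr Hinc t u Ht Hu. destruct (Rle_dec t u).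
  - pose proof (scaled_mono r x c Hr Hinc t u Ht r0). rewrite !Rabs_right by lra. lra.
  - pose proof (scaled_mono r x c Hr Hinc u t Hu ltac:(lra)). rewrite Rabs_minus_sym, (Rabs_minus_sym u).
    rewrite !Rabs_right by lra. lra. Qed.

Lemma interp_window x a b : (a <= b)%nat -> (forall tau, (a <= tau < b)%nat -> x (S tau) = x tau) ->
  forall t, INR a <= t <= INR b -> interp x t = x a.
Proof. intros Hab Hc.
  assert (Hk : forall k, (a <= k <= b)%nat -> x k = x a).
  { intros k [H1 H2]. induction H1; auto. rewrite Hc by lia. apply IHle. lia. }
  intros t [H1 H2]. assert (Ht : 0 <= t) by (pose proof (pos_INR a); lra).
  destruct (fl_spec t Ht) as [A1 A2].
  assert (Hka : (a <= fl t)%nat). { assert (a < S (fl t))%nat by (apply INR_lt; rewrite S_INR; lra). lia. }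
  destruct (lt_dec (fl t) b).
  - rewrite interp_eq, Hc by lia. rewrite Hk by lia. ring.
  - assert (INR b <= INR (fl t)) by (apply le_INR; lia). assert (t = INR b) by lra.
    rewrite H0, interp_nat. apply Hk. lia. Qed.

Lemma scaled_window (r : nat) x t0 rho : (0 < r)%nat -> 0 < rho -> rho <= t0 -> / INR r < rho / 2 ->
  (forall tau : nat, t0 - rho <= INR tau / INR r <= t0 + rho -> x (S tau) = x tau) ->
  forall u, Rabs (u - t0) <= rho / 2 -> scaled r x u = scaled r x t0.
Proof. intros Hr Hrho Ht0 Hinv Hc.
  assert (HR : 0 < INR r) by (apply lt_0_INR; auto).
  assert (Hz : 0 <= INR r * (t0 - rho / 2)) by nra.
  set (a := fl (INR r * (t0 - rho / 2))).
  set (b := S (fl (INR r * (t0 + rho / 2)))).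
  destruct (fl_spec _ Hz) as [A1 A2]. fold a in A1, A2.
  assert (Hz2 : 0 <= INR r * (t0 + rho / 2)) by nra.
  destruct (fl_spec _ Hz2) as [B1 B2].
  assert (Hb : INR b = INR (fl (INR r * (t0 + rho / 2))) + 1) by (unfold b; rewrite S_INR; auto).
  assert (Hrinv : 1 < INR r * (rho / 2)).
  { apply (Rmult_lt_compat_l (INR r)) in Hinv; auto. rewrite Rinv_r in Hinv by lra. lra. }
  assert (Hab : (a <= b)%nat). { apply INR_le. nra. }
  assert (Hw : forall t, INR a <= t <= INR b -> interp x t = x a).
  { apply interp_window; auto. intros tau [T1 T2]. apply Hc.
    apply le_INR in T1. apply lt_INR in T2. rewrite Hb in T2.
    assert (Hlt : (tau < S (fl (INR r * (t0 + rho/2))))%nat) by (apply INR_lt; rewrite S_INR; lra).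
    assert (INR tau <= INR (fl (INR r * (t0 + rho / 2)))) by (apply le_INR; lia).
    split; unfold Rdiv; apply (Rmult_le_reg_r (INR r)); auto; rewrite Rmult_assoc, Rinv_l by lra; nra. }
  intros u Hu. apply Rabs_le_inv' in Hu. unfold scaled. rewrite !Hw; auto; nra. Qed.

Section Net.
Variables (N K : nat) (sched : nat -> nat -> R) (Rm : nat -> nat -> R) (f : R -> R).
Variables (A Q Y : nat -> nat -> R) (sig : nat -> nat).
Hypothesis HS : forall k n, (k < K)%nat -> (n < N)%nat -> 0 <= sched k n.
Hypothesis HR01 : forall i j, (i < N)%nat -> (j < N)%nat -> Rm i j = 0 \/ Rm i j = 1.
Hypothesis Hnet : MW_network N K sched Rm f A Q Y sig.
Hypothesis HAmono : forall tau n, (n < N)%nat -> A tau n <= A (S tau) n.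
Hypothesis HQ0 : forall n, (n < N)%nat -> 0 <= Q O n.

Lemma count_step k tau : INR (count_sched sig k (S tau)) - INR (count_sched sig k tau) =
  if Nat.eqb (sig tau) k then 1 else 0.
Proof. simpl. rewrite plus_INR. destruct (Nat.eqb (sig tau) k); simpl; ring. Qed.

Lemma count_inc k tau : 0 <= INR (count_sched sig k (S tau)) - INR (count_sched sig k tau) <= 1.
Proof. rewrite count_step. destruct (Nat.eqb (sig tau) k); lra. Qed.

Lemma count_sum tau : rsum K (fun k => INR (count_sched sig k tau)) = INR tau.
Proof. destruct Hnet as [_ [_ [Hsig _]]]. induction tau as [|tau IHtau]. { simpl. apply rsum_zero. }
  rewrite (rsum_ext _ _ (fun k => INR (count_sched sig k tau) + (if Nat.eqb (sig tau) k then 1 else 0))).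
  rewrite rsum_plus, IHtau, rsum_indic by auto. rewrite S_INR; auto.
  intros i Hi. pose proof (count_step i tau). lra. Qed.

Lemma Bproc_count tau m : Bproc sched sig tau m = rsum K (fun k => INR (count_sched sig k tau) * sched k m).
Proof. destruct Hnet as [_ [_ [Hsig _]]]. induction tau as [|tau IHtau]. { unfold Bproc; simpl. symmetry. transitivity (rsum K (fun _ => 0)); [apply rsum_ext; intros; ring|apply rsum_zero]. }
  unfold Bproc in *. simpl rsum at 1. rewrite IHtau.
  rewrite (rsum_ext K (fun k => INR (count_sched sig k (S tau)) * sched k m) (fun k => INR (count_sched sig k tau) * sched k m + (if Nat.eqb (sig tau) k then sched k m else 0))).
  rewrite rsum_plus, rsum_indic by auto. auto.
  intros i Hi. pose proof (count_step i tau). destruct (Nat.eqb (sig tau) i); nra. Qed.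

Lemma IminusRT_lin v w n : IminusRT N Rm v n - IminusRT N Rm w n = IminusRT N Rm (fun m => v m - w m) n.
Proof. unfold IminusRT. rewrite (rsum_ext N (fun m => Rm m n * (v m - w m)) (fun m => Rm m n * v m - Rm m n * w m)) by (intros; ring).
  rewrite rsum_minus. ring. Qed.

Lemma Q_nonneg tau n : (n < N)%nat -> 0 <= Q tau n.
Proof. destruct Hnet as [HA0 [HY0 [Hsig [HY [HQ Hmax]]]]]. revert n. induction tau; intros n Hn; auto.
  assert (E : Q (S tau) n - Q tau n = (A (S tau) n - A tau n) -
     IminusRT N Rm (fun m => Rmin (sched (sig tau) m) (Q tau m)) n).
  { rewrite (HQ (S tau) n Hn), (HQ tau n Hn).
    replace (Q 0%nat n + A (S tau) n - IminusRT N Rm (fun m => Bproc sched sig (S tau) m - Y (S tau) m) n -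
      (Q 0%nat n + A tau n - IminusRT N Rm (fun m => Bproc sched sig tau m - Y tau m) n))
     with (A (S tau) n - A tau n - (IminusRT N Rm (fun m => Bproc sched sig (S tau) m - Y (S tau) m) n -
       IminusRT N Rm (fun m => Bproc sched sig tau m - Y tau m) n)) by ring.
    rewrite IminusRT_lin. unfold IminusRT.
    assert (G : forall m, (m < N)%nat -> Bproc sched sig (S tau) m - Y (S tau) m - (Bproc sched sig tau m - Y tau m) =
       Rmin (sched (sig tau) m) (Q tau m)).
    { intros m Hm. pose proof (HY tau m Hm). unfold Bproc. simpl rsum.
      unfold Rmin, Rmax in *. destruct (Rle_dec (sched (sig tau) m) (Q tau m)); destruct (Rle_dec (sched (sig tau) m - Q tau m) 0); lra. }
    erewrite (rsum_ext N _ (fun m => Rm m n * Rmin (sched (sig tau) m) (Q tau m))). rewrite G by auto. ring.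
    intros m Hm. rewrite G; auto. }
  assert (Hsum : 0 <= rsum N (fun m => Rm m n * Rmin (sched (sig tau) m) (Q tau m))).
  { apply rsum_nonneg. intros m Hm. apply Rmult_le_pos. destruct (HR01 m n Hm Hn); lra.
    apply Rmin_glb; [apply HS; auto|apply IHtau; auto]. }
  unfold IminusRT in E. pose proof (Rmin_r (sched (sig tau) n) (Q tau n)). pose proof (HAmono tau n Hn). lra. Qed.

Lemma Y_inc tau n : (n < N)%nat -> 0 <= Y (S tau) n - Y tau n <= sched (sig tau) n.
Proof. intros Hn. destruct Hnet as [HA0 [HY0 [Hsig [HY [HQ Hmax]]]]]. rewrite HY by auto.
  pose proof (Q_nonneg tau n Hn). pose proof (HS (sig tau) n (Hsig tau) Hn).
  unfold Rmax. destruct (Rle_dec (sched (sig tau) n - Q tau n) 0); lra. Qed.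

Lemma Y_le_B tau n : (n < N)%nat -> Y tau n <= Bproc sched sig tau n.
Proof. intros Hn. destruct Hnet as [HA0 [HY0 [Hsig [HY [HQ Hmax]]]]]. induction tau.
  rewrite HY0 by auto. unfold Bproc; simpl; lra.
  pose proof (Y_inc tau n Hn). unfold Bproc in *. simpl rsum. lra. Qed.

Lemma Y_nonneg tau n : (n < N)%nat -> 0 <= Y tau n.
Proof. intros Hn. destruct Hnet as [HA0 [HY0 _]]. induction tau as [|tau IH]. rewrite HY0 by auto; lra.
  pose proof (Y_inc tau n Hn). lra. Qed.

Lemma scaled_Q r t n : (n < N)%nat ->
  scaled r (fun tau => Q tau n) t = Q O n / INR r + scaled r (fun tau => A tau n) t -
    IminusRT N Rm (fun m => rsum K (fun k => scaled r (fun tau => INR (count_sched sig k tau)) t * sched k m)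
                           - scaled r (fun tau => Y tau m) t) n.
Proof. intros Hn. destruct Hnet as [HA0 [HY0 [Hsig [HY [HQ Hmax]]]]].
  rewrite (scaled_ext r _ (fun tau => (Q O n + A tau n) - ((Bproc sched sig tau n - Y tau n) -
     rsum N (fun m => Rm m n * (Bproc sched sig tau m - Y tau m))))) by (intros; apply HQ; auto).
  rewrite scaled_minus, scaled_plus, scaled_const, scaled_minus, scaled_rsum.
  unfold IminusRT. f_equal. f_equal.
  - rewrite scaled_minus. f_equal.
    rewrite (scaled_ext r _ (fun tau => rsum K (fun k => INR (count_sched sig k tau) * sched k n))) by (intros; apply Bproc_count).
    rewrite scaled_rsum. apply rsum_ext. intros. apply scaled_mulr.
  - apply rsum_ext. intros m Hm. rewrite scaled_scal. f_equal. rewrite scaled_minus. f_equal.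
    rewrite (scaled_ext r _ (fun tau => rsum K (fun k => INR (count_sched sig k tau) * sched k m))) by (intros; apply Bproc_count).
    rewrite scaled_rsum. apply rsum_ext. intros. apply scaled_mulr. Qed.

End Net.

Lemma scaled_nonneg r x t : (0 < r)%nat -> (forall k, 0 <= x k) -> 0 <= t -> 0 <= scaled r x t.
Proof. intros Hr Hx Ht. assert (0 < INR r) by (apply lt_0_INR; auto). unfold scaled.
  assert (Hz : 0 <= INR r * t) by nra.
  pose proof (interp_between x (INR r * t) 0 (x (fl (INR r * t)) + x (S (fl (INR r * t)))) Hz) as I.
  pose proof (Hx (fl (INR r * t))). pose proof (Hx (S (fl (INR r * t)))).
  assert (0 <= interp x (INR r * t)) by (apply I; lra).
  apply Rmult_le_pos; [lra|left; apply Rinv_0_lt_compat; lra]. Qed.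

Lemma le_eps a b : (forall eps, 0 < eps -> a <= b + eps) -> a <= b.
Proof. intros H. destruct (Rle_dec a b); auto. exfalso. specialize (H ((a - b)/2) ltac:(lra)). lra. Qed.

Lemma fin_uniform (D : nat) (P : nat -> nat -> Prop) :
  (forall c J J', (J <= J')%nat -> P c J -> P c J') ->
  (forall c, (c < D)%nat -> exists J, P c J) -> exists J, forall c, (c < D)%nat -> P c J.
Proof. intros Hm. induction D; intros H. exists O; intros; lia.
  destruct IHD as [J1 HJ1]. intros; apply H; lia. destruct (H D ltac:(lia)) as [J0 HJ0].
  exists (max J0 J1). intros c Hc. destruct (Nat.eq_dec c D). subst; apply (Hm _ J0); auto; lia.
  apply (Hm _ J1); [lia|apply HJ1; lia]. Qed.

Lemma fin_min_pos (D : nat) (P : nat -> R -> Prop) :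
  (forall c x y, 0 < x -> x <= y -> P c y -> P c x) ->
  (forall c, (c < D)%nat -> exists x, 0 < x /\ P c x) -> exists x, 0 < x /\ forall c, (c < D)%nat -> P c x.
Proof. intros Hm. induction D; intros H. exists 1; split; [lra|intros; lia].
  destruct IHD as [x1 [Hx1 H1]]. intros; apply H; lia. destruct (H D ltac:(lia)) as [x0 [Hx0 H0]].
  exists (Rmin x0 x1). split. apply Rmin_pos; auto. intros c Hc. destruct (Nat.eq_dec c D).
  subst. apply (Hm _ _ x0); auto. apply Rmin_pos; auto. apply Rmin_l.
  apply (Hm _ _ x1); auto. apply Rmin_pos; auto. apply Rmin_r. apply H1; lia. Qed.

Section Lin.
Variables (N : nat) (Rm : nat -> nat -> R).
Hypothesis HR01 : forall i j, (i < N)%nat -> (j < N)%nat -> Rm i j = 0 \/ Rm i j = 1.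

Lemma IminusRT_diff v w b n : (n < N)%nat -> (forall m, (m < N)%nat -> Rabs (v m - w m) <= b) ->
  Rabs (IminusRT N Rm v n - IminusRT N Rm w n) <= (1 + INR N) * b.
Proof. intros Hn Hb. rewrite IminusRT_lin. unfold IminusRT.
  eapply Rle_trans. apply Rabs_triang. rewrite Rabs_Ropp.
  eapply Rle_trans. apply Rplus_le_compat. apply Hb; auto. apply rsum_abs.
  assert (rsum N (fun i => Rabs (Rm i n * (v i - w i))) <= rsum N (fun _ => b)).
  { apply rsum_le. intros i Hi. rewrite Rabs_mult. pose proof (Hb i Hi). pose proof (Rabs_pos (v i - w i)).
    destruct (HR01 i n Hi Hn) as [E|E]; rewrite E; rewrite ?Rabs_R0, ?Rabs_R1; lra. }
  rewrite rsum_const in H. lra. Qed.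

Lemma weight_diff f q q' b n : (n < N)%nat -> (forall m, (m < N)%nat -> Rabs (f (q' m) - f (q m)) <= b) ->
  Rabs (weight N Rm f q' n - weight N Rm f q n) <= (1 + INR N) * b.
Proof. intros Hn Hb. unfold weight, IminusR.
  replace (f (q' n) - rsum N (fun m => Rm n m * f (q' m)) - (f (q n) - rsum N (fun m => Rm n m * f (q m))))
    with ((f (q' n) - f (q n)) + - rsum N (fun m => Rm n m * (f (q' m) - f (q m)))).
  2:{ rewrite (rsum_ext N (fun m => Rm n m * (f (q' m) - f (q m))) (fun m => Rm n m * f (q' m) - Rm n m * f (q m))) by (intros; ring).
      rewrite rsum_minus. ring. }
  eapply Rle_trans. apply Rabs_triang. rewrite Rabs_Ropp.
  eapply Rle_trans. apply Rplus_le_compat. apply Hb; auto. apply rsum_abs.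
  assert (rsum N (fun i => Rabs (Rm n i * (f (q' i) - f (q i)))) <= rsum N (fun _ => b)).
  { apply rsum_le. intros i Hi. rewrite Rabs_mult. pose proof (Hb i Hi). pose proof (Rabs_pos (f (q' i) - f (q i))).
    destruct (HR01 n i Hn Hi) as [E|E]; rewrite E; rewrite ?Rabs_R0, ?Rabs_R1; lra. }
  rewrite rsum_const in H. lra. Qed.
End Lin.

Definition Pm (N K : nat) (sched : nat -> nat -> R) := rsum K (fun k => rsum N (fun n => sched k n)).

Lemma Pm_ge N K sched : (forall k n, (k < K)%nat -> (n < N)%nat -> 0 <= sched k n) ->
  0 <= Pm N K sched /\ (forall k n, (k < K)%nat -> (n < N)%nat -> sched k n <= Pm N K sched) /\
  (forall n, (n < N)%nat -> rsum K (fun k => sched k n) <= Pm N K sched).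
Proof. intros HS. unfold Pm.
  assert (Hin : forall k, (k < K)%nat -> 0 <= rsum N (fun n => sched k n)) by (intros; apply rsum_nonneg; auto).
  split; [apply rsum_nonneg; auto|split].
  - intros k n Hk Hn. eapply Rle_trans; [|apply (rsum_term_le K _ k); auto].
    apply (rsum_term_le N (fun n => sched k n)); auto.
  - intros n Hn. apply rsum_le. intros k Hk. apply (rsum_term_le N (fun n => sched k n)); auto. Qed.

Lemma dot_diff N K sched (w w' : nat -> R) b k : (forall k n, (k < K)%nat -> (n < N)%nat -> 0 <= sched k n) ->
  (k < K)%nat -> 0 <= b -> (forall n, (n < N)%nat -> Rabs (w' n - w n) <= b) ->
  Rabs (dotN N (sched k) w' - dotN N (sched k) w) <= Pm N K sched * b.
Proof. intros HS Hk Hb0 Hb. unfold dotN. rewrite <- rsum_minus.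
  eapply Rle_trans. apply rsum_abs.
  destruct (Pm_ge N K sched HS) as [P0 [P1 P2]].
  apply Rle_trans with (rsum N (fun n => sched k n * b)).
  - apply rsum_le. intros n Hn. replace (sched k n * w' n - sched k n * w n) with (sched k n * (w' n - w n)) by ring.
    rewrite Rabs_mult, Rabs_right by (apply Rle_ge; auto). apply Rmult_le_compat_l; auto.
  - rewrite (rsum_ext N _ (fun n => b * sched k n)) by (intros; ring). rewrite rsum_scal.
    rewrite Rmult_comm. apply Rmult_le_compat_r; auto. unfold Pm.
    apply (rsum_term_le K (fun k => rsum N (fun n => sched k n))); auto.
    intros; apply rsum_nonneg; auto. Qed.

Lemma dot_cont N K sched Rm f :
  (forall k n, (k < K)%nat -> (n < N)%nat -> 0 <= sched k n) ->
  (forall i j, (i < N)%nat -> (j < N)%nat -> Rm i j = 0 \/ Rm i j = 1) -> f_standing f ->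
  forall q0 : nat -> R, (forall n, (n < N)%nat -> 0 <= q0 n) -> forall e, 0 < e ->
  exists rho, 0 < rho /\ forall q' : nat -> R, (forall n, (n < N)%nat -> 0 <= q' n /\ Rabs (q' n - q0 n) < rho) ->
    forall k, (k < K)%nat ->
      Rabs (dotN N (sched k) (weight N Rm f q') - dotN N (sched k) (weight N Rm f q0)) < e.
Proof. intros HS HR Hf q0 Hq0 e He.
  destruct (Pm_ge N K sched HS) as [P0 [P1 P2]].
  set (P := Pm N K sched) in *.
  assert (HN : 0 < 1 + INR N) by (pose proof (pos_INR N); lra).
  set (e' := e / ((P + 1) * (1 + INR N))).
  assert (He' : 0 < e') by (unfold e'; apply Rdiv_lt_0_compat; [lra|nra]).
  destruct (fin_min_pos N (fun n rho => forall y, 0 <= y -> Rabs (y - q0 n) < rho -> Rabs (f y - f (q0 n)) < e')) as [rho [Hr Hrho]].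
  { intros c x y Hx Hxy H z Hz Hzc. apply H; auto; lra. }
  { intros c Hc. apply (f_cont f Hf (q0 c) (Hq0 c Hc) e' He'). }
  exists rho. split; auto. intros q' Hq' k Hk.
  assert (Hw : forall n, (n < N)%nat -> Rabs (weight N Rm f q' n - weight N Rm f q0 n) <= (1 + INR N) * e').
  { intros n Hn. apply weight_diff; auto. intros m Hm. left. destruct (Hq' m Hm). apply Hrho; auto. }
  eapply Rle_lt_trans. apply (dot_diff N K sched (weight N Rm f q0) (weight N Rm f q') ((1 + INR N) * e') k HS Hk); [nra|exact Hw].
  fold P. replace (P * ((1 + INR N) * e')) with (e * (P / (P + 1))) by (unfold e'; field; lra).
  assert (P / (P + 1) < 1) by (apply (Rmult_lt_reg_r (P+1)); [lra|]; unfold Rdiv; rewrite Rmult_assoc, Rinv_l by lra; lra).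
  nra. Qed.

Lemma scaled_A_close (N : nat) (A : nat -> nat -> R) (lam : nat -> R) (T eta : R) (mm r : nat) :
  (0 < r)%nat -> 0 <= T -> T + 1 <= INR mm ->
  (forall tau n, (tau <= mm * r)%nat -> (n < N)%nat -> Rabs (A tau n - lam n * INR tau) <= eta * INR r) ->
  forall t n, 0 <= t <= T -> (n < N)%nat -> Rabs (scaled r (fun tau => A tau n) t - lam n * t) <= eta.
Proof. intros Hr HT Hmm HA t n Ht Hn. assert (HR : 0 < INR r) by (apply lt_0_INR; auto).
  assert (HR1 : 1 <= INR r) by (apply (le_INR 1); lia).
  rewrite (scaled_ext r _ (fun tau => (A tau n - lam n * INR tau) + lam n * INR tau)) by (intros; ring).
  rewrite scaled_plus, scaled_scal, scaled_id by (auto; lra).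
  replace (scaled r (fun tau => A tau n - lam n * INR tau) t + lam n * t - lam n * t)
    with (scaled r (fun tau => A tau n - lam n * INR tau) t) by ring.
  unfold scaled. assert (Hz : 0 <= INR r * t) by nra. destruct (fl_spec _ Hz) as [F1 F2].
  assert (Hb : forall tau, INR tau <= INR r * T + 1 -> Rabs (A tau n - lam n * INR tau) <= eta * INR r).
  { intros tau Htau. apply HA; auto. apply INR_le. rewrite mult_INR. nra. }
  assert (B1 := Hb (fl (INR r * t)) ltac:(nra)).
  assert (B2 := Hb (S (fl (INR r * t))) ltac:(rewrite S_INR; nra)).
  apply Rabs_le_inv' in B1. apply Rabs_le_inv' in B2.
  pose proof (interp_between (fun tau => A tau n - lam n * INR tau) (INR r * t) (- (eta * INR r)) (eta * INR r) Hz B1 B2) as I.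
  unfold Rdiv. rewrite Rabs_mult, Rabs_inv, (Rabs_right (INR r)) by lra.
  apply (Rmult_le_reg_r (INR r)); auto. rewrite Rmult_assoc, Rinv_l by lra. rewrite Rmult_1_r.
  apply Rabs_le. lra. Qed.

Record inst := mkI { ir : nat; iA : nat -> nat -> R; iQ : nat -> nat -> R; iY : nat -> nat -> R; isig : nat -> nat }.

Lemma Rabs_minus_le a b : Rabs (a - b) <= Rabs a + Rabs b.
Proof. unfold Rminus. eapply Rle_trans. apply Rabs_triang. rewrite Rabs_Ropp. lra. Qed.

Lemma sum_close K (a b : nat -> R) (sc : nat -> R) e :
  (forall k, (k < K)%nat -> 0 <= sc k) -> (forall k, (k < K)%nat -> Rabs (a k - b k) <= e) ->
  Rabs (rsum K (fun k => a k * sc k) - rsum K (fun k => b k * sc k)) <= e * rsum K sc.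
Proof. intros Hs Hab. rewrite <- rsum_minus. eapply Rle_trans. apply rsum_abs.
  rewrite <- rsum_scal. apply rsum_le. intros k Hk.
  replace (a k * sc k - b k * sc k) with ((a k - b k) * sc k) by ring. rewrite Rabs_mult, (Rabs_right (sc k)) by (apply Rle_ge; auto).
  rewrite Rmult_comm, (Rmult_comm e). apply Rmult_le_compat_l; auto. Qed.

Lemma lip_near T g t0 : lipT T g -> 0 <= t0 <= T -> forall e, 0 < e ->
  exists rho, 0 < rho /\ forall u, 0 <= u <= T -> Rabs (u - t0) <= rho -> Rabs (g u - g t0) <= e.
Proof. intros [L [HL G]] Ht0 e He. exists (e / (L + 1)). split. apply Rdiv_lt_0_compat; lra.
  intros u Hu Hut. eapply Rle_trans. apply G; auto.
  apply Rle_trans with (L * (e / (L + 1))). apply Rmult_le_compat_l; auto.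
  apply (Rmult_le_reg_r (L + 1)); [lra|]. replace (L * (e / (L + 1)) * (L + 1)) with (L * e) by (field; lra). nra. Qed.

Section DL.
Variables (N K : nat) (sched : nat -> nat -> R) (Rm : nat -> nat -> R) (f : R -> R).
Hypothesis HS : forall k n, (k < K)%nat -> (n < N)%nat -> 0 <= sched k n.
Hypothesis HR01 : forall i j, (i < N)%nat -> (j < N)%nat -> Rm i j = 0 \/ Rm i j = 1.
Hypothesis Hf : f_standing f.
Hypothesis Hscale : scale_invariance N K sched Rm f.
Variables (lam : nat -> R) (T : R) (mm : nat).
Hypothesis HT : 0 < T.
Hypothesis Hmm : T + 1 <= INR mm.

Definition good (r : nat) (eta : R) (A Q Y : nat -> nat -> R) (sig : nat -> nat) : Prop :=
  MW_network N K sched Rm f A Q Y sig /\ (forall n, (n < N)%nat -> 0 <= Q O n <= eta * INR r) /\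
  (forall tau n, (n < N)%nat -> A tau n <= A (S tau) n) /\
  (forall tau n, (tau <= mm * r)%nat -> (n < N)%nat -> Rabs (A tau n - lam n * INR tau) <= eta * INR r).

Theorem DL delta : 0 < delta -> exists eta, 0 < eta /\ exists r1 : nat, forall r, (r1 <= r)%nat ->
  forall A Q Y sig, good r eta A Q Y sig ->
    dist_FMS0_lt N K sched Rm f lam T (scaled_path r A Q Y sig) delta.
Proof. intros Hdel. apply NNPP; intro Hneg.
  assert (Hj : forall j : nat, exists p : inst, (S j <= ir p)%nat /\ good (ir p) (/ (INR j + 1)) (iA p) (iQ p) (iY p) (isig p) /\
     ~ dist_FMS0_lt N K sched Rm f lam T (scaled_path (ir p) (iA p) (iQ p) (iY p) (isig p)) delta).
  { intros j. apply NNPP. intros H. apply Hneg. exists (/ (INR j + 1)). split.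
    apply Rinv_0_lt_compat; pose proof (pos_INR j); lra.
    exists (S j). intros r Hr A Q Y sig Hg. apply NNPP. intros Hnd. apply H. exists (mkI r A Q Y sig). simpl. auto. }
  set (P := fun j => proj1_sig (constructive_indefinite_description _ (Hj j))).
  assert (HP : forall j, (S j <= ir (P j))%nat /\ good (ir (P j)) (/ (INR j + 1)) (iA (P j)) (iQ (P j)) (iY (P j)) (isig (P j)) /\
     ~ dist_FMS0_lt N K sched Rm f lam T (scaled_path (ir (P j)) (iA (P j)) (iQ (P j)) (iY (P j)) (isig (P j))) delta).
  { intros j. unfold P. destruct (constructive_indefinite_description _ _). simpl. auto. }
  destruct (Pm_ge N K sched HS) as [P0 [P1 P2]].
  set (Pmx := Pm N K sched) in *.
  set (L := 1 + Pmx).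
  set (g := fun j c t => if Nat.ltb c K then scaled (ir (P j)) (fun tau => INR (count_sched (isig (P j)) c tau)) t
                         else scaled (ir (P j)) (fun tau => iY (P j) tau (c - K)) t).
  assert (Hr0 : forall j, (0 < ir (P j))%nat) by (intros j; destruct (HP j); lia).
  assert (Hinc : forall j c, (c < K + N)%nat -> exists x : nat -> R, (forall t, g j c t = scaled (ir (P j)) x t) /\
      (forall k, 0 <= x (S k) - x k <= L) /\ x O = 0).
  { intros j c Hc. destruct (HP j) as [_ [[Hnet [HQ0 [HAm _]]] _]]. unfold g.
    destruct (Nat.ltb_spec c K).
    - eexists. split. intros; reflexivity. split. intros k. pose proof (count_inc (isig (P j)) c k). unfold L; lra.
      simpl; auto.
    - eexists. split. intros; reflexivity. split. intros k.
      assert (Hn : (c - K < N)%nat) by lia.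
      pose proof (Y_inc N K sched Rm f _ _ _ _ HS HR01 Hnet HAm (fun n Hn => proj1 (HQ0 n Hn)) k (c - K) Hn).
      destruct Hnet as [_ [_ [Hsig _]]]. pose proof (P1 (isig (P j) k) (c - K)%nat (Hsig k) Hn). unfold L; lra.
      destruct Hnet as [_ [HY0 _]]. apply HY0. lia. }
  assert (HgL : forall j c s t, (c < K + N)%nat -> 0 <= s <= T -> 0 <= t <= T -> Rabs (g j c t - g j c s) <= L * Rabs (t - s)).
  { intros j c s t Hc Hs Ht. destruct (Hinc j c Hc) as [x [Ex [Ix _]]]. rewrite !Ex.
    apply scaled_lip; auto; lra. }
  assert (Hg0 : forall j c, (c < K + N)%nat -> g j c 0 = 0).
  { intros j c Hc. destruct (Hinc j c Hc) as [x [Ex [_ X0]]]. rewrite Ex, scaled_zero, X0. unfold Rdiv; ring. }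
  destruct (AA T L (L * T) (K + N) g HT ltac:(unfold L; lra)) as [d [Hd [G HG]]].
  { intros j c t Hc Ht. pose proof (HgL j c 0 t Hc ltac:(lra) Ht). rewrite Hg0 in H by auto.
    rewrite !Rminus_0_r in H. rewrite (Rabs_right t) in H by lra.
    assert (L * t <= L * T) by (apply Rmult_le_compat_l; unfold L; lra). lra. }
  { exact HgL. }
  set (r := fun j => ir (P (d j))). set (AA_ := fun j => iA (P (d j))). set (QQ := fun j => iQ (P (d j))).
  set (YY := fun j => iY (P (d j))). set (ss := fun j => isig (P (d j))).
  set (eta := fun j => / (INR (d j) + 1)).
  assert (Hgood : forall j, good (r j) (eta j) (AA_ j) (QQ j) (YY j) (ss j)) by (intros j; apply (HP (d j))).
  assert (Hnd : forall j, ~ dist_FMS0_lt N K sched Rm f lam T (scaled_path (r j) (AA_ j) (QQ j) (YY j) (ss j)) delta)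
    by (intros j; apply (HP (d j))).
  assert (Hrj : forall j, (S j <= r j)%nat) by (intros j; pose proof (proj1 (HP (d j))); pose proof (Hd j); unfold r; lia).
  assert (Hrpos : forall j, 0 < INR (r j)) by (intros j; apply lt_0_INR; specialize (Hrj j); lia).
  assert (Heta : forall e, 0 < e -> exists J, forall j, (J <= j)%nat -> eta j < e /\ / INR (r j) < e).
  { intros e He. destruct (inv_small e He) as [J HJ]. exists J. intros j Hjj. split.
    - unfold eta. apply Rle_lt_trans with (/ (INR j + 1)); [|apply HJ; lia].
      apply Rinv_le_contravar. pose proof (pos_INR j); lra. apply Rplus_le_compat_r, le_INR, Hd.
    - apply Rle_lt_trans with (/ (INR j + 1)); [|apply HJ; lia].
      apply Rinv_le_contravar. pose proof (pos_INR j); lra. rewrite <- S_INR. apply le_INR, Hrj. }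
  assert (Hetapos : forall j, 0 < eta j) by (intros j; unfold eta; apply Rinv_0_lt_compat; pose proof (pos_INR (d j)); lra).
  set (Sx := fun k t => G k t). set (Yx := fun n t => G (K + n)%nat t).
  assert (U : forall e, 0 < e -> exists J, forall j, (J <= j)%nat -> forall t, 0 <= t <= T ->
     (forall k, (k < K)%nat -> Rabs (scaled (r j) (fun tau => INR (count_sched (ss j) k tau)) t - Sx k t) <= e) /\
     (forall n, (n < N)%nat -> Rabs (scaled (r j) (fun tau => YY j tau n) t - Yx n t) <= e)).
  { intros e He. destruct (fin_uniform (K + N) (fun c J => forall j, (J <= j)%nat -> forall t, 0 <= t <= T ->
        Rabs (g (d j) c t - G c t) <= e)) as [J HJ].
    { intros c J J' HJJ H j Hjj. apply H. lia. }
    { intros c Hc. apply HG; auto. }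
    exists J. intros j Hjj t Ht. split.
    - intros k Hk. specialize (HJ k ltac:(lia) j Hjj t Ht). unfold g in HJ.
      destruct (Nat.ltb_spec k K); [|lia]. exact HJ.
    - intros n Hn. specialize (HJ (K + n)%nat ltac:(lia) j Hjj t Ht). unfold g in HJ.
      destruct (Nat.ltb_spec (K + n) K); [lia|]. replace (K + n - K)%nat with n in HJ by lia. exact HJ. }
  set (vx := fun m t => rsum K (fun k => Sx k t * sched k m) - Yx m t).
  set (qx := fun n t => lam n * t - IminusRT N Rm (fun m => vx m t) n).
  set (sj := fun j k t => scaled (r j) (fun tau => INR (count_sched (ss j) k tau)) t).
  set (yj := fun j n t => scaled (r j) (fun tau => YY j tau n) t).
  set (qj := fun j n t => scaled (r j) (fun tau => QQ j tau n) t).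
  set (aj := fun j n t => scaled (r j) (fun tau => AA_ j tau n) t).
  assert (Hrn : forall j, (0 < r j)%nat) by (intros j; specialize (Hrj j); lia).
  assert (Fnet : forall j, MW_network N K sched Rm f (AA_ j) (QQ j) (YY j) (ss j)) by (intros j; apply (Hgood j)).
  assert (FAm : forall j tau n, (n < N)%nat -> AA_ j tau n <= AA_ j (S tau) n) by (intros j; apply (Hgood j)).
  assert (FQ0 : forall j n, (n < N)%nat -> 0 <= QQ j O n) by (intros j n Hn; apply (proj1 (proj2 (Hgood j)) n Hn)).
  assert (FQnn : forall j tau n, (n < N)%nat -> 0 <= QQ j tau n) by (intros j tau n Hn; eapply Q_nonneg; eauto).
  assert (Fa : forall j t n, 0 <= t <= T -> (n < N)%nat -> Rabs (aj j n t - lam n * t) <= eta j).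
  { intros j t n Ht Hn. unfold aj. apply (scaled_A_close N (AA_ j) lam T (eta j) mm (r j) (Hrn j) ltac:(lra) Hmm); auto. apply (Hgood j). }
  assert (FQ0b : forall j n, (n < N)%nat -> 0 <= QQ j O n / INR (r j) <= eta j).
  { intros j n Hn. destruct (proj1 (proj2 (Hgood j)) n Hn). specialize (Hrpos j). split.
    apply Rmult_le_pos; [lra|left; apply Rinv_0_lt_compat; lra].
    unfold Rdiv. apply (Rmult_le_reg_r (INR (r j))); auto. rewrite Rmult_assoc, Rinv_l by lra. lra. }
  assert (Fq : forall j t n, (n < N)%nat -> qj j n t = QQ j O n / INR (r j) + aj j n t -
      IminusRT N Rm (fun m => rsum K (fun k => sj j k t * sched k m) - yj j m t) n).
  { intros j t n Hn. unfold qj, aj, sj, yj. eapply scaled_Q; eauto. }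
  assert (UQ : forall e, 0 < e -> exists J, forall j, (J <= j)%nat -> forall t, 0 <= t <= T ->
      forall n, (n < N)%nat -> Rabs (qj j n t - qx n t) <= e).
  { intros e He. set (e1 := e / (2 * (1 + INR N) * (Pmx + 1))).
    assert (HN : 0 < 1 + INR N) by (pose proof (pos_INR N); lra).
    assert (He1 : 0 < e1) by (unfold e1; apply Rdiv_lt_0_compat; [lra|nra]).
    destruct (U e1 He1) as [J1 HJ1]. destruct (Heta (e/4) ltac:(lra)) as [J2 HJ2].
    exists (max J1 J2). intros j Hjj t Ht n Hn. rewrite Fq by auto.
    destruct (HJ1 j ltac:(lia) t Ht) as [Us Uy]. destruct (HJ2 j ltac:(lia)) as [E1 _].
    pose proof (FQ0b j n Hn). pose proof (Fa j t n Ht Hn).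
    assert (Hv : Rabs (IminusRT N Rm (fun m => rsum K (fun k => sj j k t * sched k m) - yj j m t) n -
                       IminusRT N Rm (fun m => vx m t) n) <= (1 + INR N) * (e1 * Pmx + e1)).
    { apply IminusRT_diff; auto. intros m Hm. unfold vx.
      replace (rsum K (fun k => sj j k t * sched k m) - yj j m t - (rsum K (fun k => Sx k t * sched k m) - Yx m t))
        with ((rsum K (fun k => sj j k t * sched k m) - rsum K (fun k => Sx k t * sched k m)) - (yj j m t - Yx m t)) by ring.
      eapply Rle_trans. apply Rabs_minus_le.
      pose proof (sum_close K (fun k => sj j k t) (fun k => Sx k t) (fun k => sched k m) e1 ltac:(intros; apply HS; auto) Us).
      pose proof (P2 m Hm). pose proof (Uy m Hm). assert (e1 * rsum K (fun k => sched k m) <= e1 * Pmx) by (apply Rmult_le_compat_l; lra).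
      cbv beta in H1. unfold yj. lra. }
    assert (Hq1 : (1 + INR N) * (e1 * Pmx + e1) = e / 2) by (unfold e1; field; lra).
    replace (QQ j 0%nat n / INR (r j) + aj j n t - IminusRT N Rm (fun m => rsum K (fun k => sj j k t * sched k m) - yj j m t) n - qx n t)
      with (QQ j 0%nat n / INR (r j) + (aj j n t - lam n * t) - (IminusRT N Rm (fun m => rsum K (fun k => sj j k t * sched k m) - yj j m t) n -
                       IminusRT N Rm (fun m => vx m t) n)) by (unfold qx; ring).
    eapply Rle_trans. apply Rabs_minus_le. eapply Rle_trans. apply Rplus_le_compat_r. apply Rabs_triang.
    rewrite Rabs_right by lra. lra. }

  assert (Fsinc : forall j k tau, 0 <= INR (count_sched (ss j) k (S tau)) - INR (count_sched (ss j) k tau) <= L).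
  { intros j k tau. pose proof (count_inc (ss j) k tau). unfold L; lra. }
  assert (Fyinc : forall j n tau, (n < N)%nat -> 0 <= YY j (S tau) n - YY j tau n <= L).
  { intros j n tau Hn. assert (H := Y_inc N K sched Rm f (AA_ j) (QQ j) (YY j) (ss j) HS HR01 (Fnet j) (FAm j) (FQ0 j) tau n Hn).
    destruct (Fnet j) as [_ [_ [Hsig _]]]. pose proof (P1 _ n (Hsig tau) Hn). unfold L; lra. }
  assert (Fs0 : forall j k, sj j k 0 = 0) by (intros; unfold sj; rewrite scaled_zero; simpl; unfold Rdiv; ring).
  assert (Fy0 : forall j n, (n < N)%nat -> yj j n 0 = 0).
  { intros j n Hn; unfold yj; rewrite scaled_zero. destruct (Fnet j) as [_ [HY0 _]]. rewrite HY0 by auto. unfold Rdiv; ring. }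
  assert (Fsm : forall j k s t, 0 <= s -> s <= t -> 0 <= sj j k t - sj j k s <= L * (t - s)).
  { intros j k s t Hs Hst. unfold sj. apply scaled_mono; auto. }
  assert (Fym : forall j n s t, (n < N)%nat -> 0 <= s -> s <= t -> 0 <= yj j n t - yj j n s <= L * (t - s)).
  { intros j n s t Hn Hs Hst. unfold yj. apply scaled_mono; auto. }
  assert (HL0 : 0 <= L) by (unfold L; lra).
  assert (SxL : forall k s t, (k < K)%nat -> 0 <= s <= T -> 0 <= t <= T -> Rabs (Sx k t - Sx k s) <= L * Rabs (t - s)).
  { intros k s t Hk Hs Ht. apply le_eps. intros e He. destruct (U (e/2) ltac:(lra)) as [J HJ].
    destruct (HJ J (le_n J) t Ht) as [A1 _]. destruct (HJ J (le_n J) s Hs) as [A2 _].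
    specialize (A1 k Hk). specialize (A2 k Hk). fold (sj J k t) in A1. fold (sj J k s) in A2.
    assert (Rabs (sj J k t - sj J k s) <= L * Rabs (t - s)) by (unfold sj; apply scaled_lip; auto; lra).
    replace (Sx k t - Sx k s) with (- (sj J k t - Sx k t) + (sj J k t - sj J k s) + (sj J k s - Sx k s)) by ring.
    eapply Rle_trans. apply Rabs_triang. eapply Rle_trans. apply Rplus_le_compat_r. apply Rabs_triang.
    rewrite Rabs_Ropp. lra. }
  assert (YxL : forall n s t, (n < N)%nat -> 0 <= s <= T -> 0 <= t <= T -> Rabs (Yx n t - Yx n s) <= L * Rabs (t - s)).
  { intros n s t Hn Hs Ht. apply le_eps. intros e He. destruct (U (e/2) ltac:(lra)) as [J HJ].
    destruct (HJ J (le_n J) t Ht) as [_ A1]. destruct (HJ J (le_n J) s Hs) as [_ A2].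
    specialize (A1 n Hn). specialize (A2 n Hn). fold (yj J n t) in A1. fold (yj J n s) in A2.
    assert (Rabs (yj J n t - yj J n s) <= L * Rabs (t - s)) by (unfold yj; apply scaled_lip; auto; lra).
    replace (Yx n t - Yx n s) with (- (yj J n t - Yx n t) + (yj J n t - yj J n s) + (yj J n s - Yx n s)) by ring.
    eapply Rle_trans. apply Rabs_triang. eapply Rle_trans. apply Rplus_le_compat_r. apply Rabs_triang.
    rewrite Rabs_Ropp. lra. }
  assert (SxM : forall k s t, (k < K)%nat -> 0 <= s -> s <= t -> t <= T -> Sx k s <= Sx k t).
  { intros k s t Hk Hs Hst Ht. apply le_eps. intros e He. destruct (U (e/2) ltac:(lra)) as [J HJ].
    destruct (HJ J (le_n J) t ltac:(lra)) as [A1 _]. destruct (HJ J (le_n J) s ltac:(lra)) as [A2 _].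
    specialize (A1 k Hk). specialize (A2 k Hk). fold (sj J k t) in A1. fold (sj J k s) in A2.
    pose proof (Fsm J k s t Hs Hst). apply Rabs_le_inv' in A1. apply Rabs_le_inv' in A2. lra. }
  assert (YxM : forall n s t, (n < N)%nat -> 0 <= s -> s <= t -> t <= T -> Yx n s <= Yx n t).
  { intros n s t Hn Hs Hst Ht. apply le_eps. intros e He. destruct (U (e/2) ltac:(lra)) as [J HJ].
    destruct (HJ J (le_n J) t ltac:(lra)) as [_ A1]. destruct (HJ J (le_n J) s ltac:(lra)) as [_ A2].
    specialize (A1 n Hn). specialize (A2 n Hn). fold (yj J n t) in A1. fold (yj J n s) in A2.
    pose proof (Fym J n s t Hn Hs Hst). apply Rabs_le_inv' in A1. apply Rabs_le_inv' in A2. lra. }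
  assert (Sx0 : forall k, (k < K)%nat -> Sx k 0 = 0).
  { intros k Hk. apply Rle_antisym; apply le_eps; intros e He; destruct (U e He) as [J HJ];
    destruct (HJ J (le_n J) 0 ltac:(lra)) as [A1 _]; specialize (A1 k Hk); fold (sj J k 0) in A1;
    rewrite Fs0 in A1; apply Rabs_le_inv' in A1; lra. }
  assert (Yx0 : forall n, (n < N)%nat -> Yx n 0 = 0).
  { intros n Hn. apply Rle_antisym; apply le_eps; intros e He; destruct (U e He) as [J HJ];
    destruct (HJ J (le_n J) 0 ltac:(lra)) as [_ A1]; specialize (A1 n Hn); fold (yj J n 0) in A1;
    rewrite Fy0 in A1 by auto; apply Rabs_le_inv' in A1; lra. }
  assert (Sxnn : forall k t, (k < K)%nat -> 0 <= t <= T -> 0 <= Sx k t).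
  { intros k t Hk Ht. rewrite <- (Sx0 k Hk) at 1. apply SxM; auto; lra. }
  assert (Yxnn : forall n t, (n < N)%nat -> 0 <= t <= T -> 0 <= Yx n t).
  { intros n t Hn Ht. rewrite <- (Yx0 n Hn) at 1. apply YxM; auto; lra. }
  assert (Sxsum : forall t, 0 <= t <= T -> rsum K (fun k => Sx k t) = t).
  { intros t Ht. assert (E : forall j, rsum K (fun k => sj j k t) = t).
    { intros j. unfold sj. rewrite <- scaled_rsum.
      rewrite (scaled_ext _ _ INR) by (intros; eapply count_sum; eauto). apply scaled_id; auto; lra. }
    apply Rle_antisym; apply le_eps; intros e He;
    destruct (U (e / (INR K + 1)) ltac:(apply Rdiv_lt_0_compat; [lra|pose proof (pos_INR K); lra])) as [J HJ];
    destruct (HJ J (le_n J) t Ht) as [A1 _];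
    pose proof (sum_close K (fun k => sj J k t) (fun k => Sx k t) (fun _ => 1) (e / (INR K + 1)) ltac:(intros; lra) A1) as B;
    cbv beta in B; rewrite (rsum_ext K (fun k => sj J k t * 1) (fun k => sj J k t)) in B by (intros; ring);
    rewrite (rsum_ext K (fun k => Sx k t * 1) (fun k => Sx k t)) in B by (intros; ring);
    rewrite rsum_const, E in B; apply Rabs_le_inv' in B;
    assert (e / (INR K + 1) * (INR K * 1) <= e) by (pose proof (pos_INR K);
      apply (Rmult_le_reg_r (INR K + 1)); [lra|]; unfold Rdiv; replace (e * / (INR K + 1) * (INR K * 1) * (INR K + 1)) with (e * INR K) by (field; lra); nra);
    lra. }
  assert (YxB : forall n t, (n < N)%nat -> 0 <= t <= T -> Yx n t <= rsum K (fun k => Sx k t * sched k n)).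
  { intros n t Hn Ht. apply le_eps. intros e He.
    destruct (U (e / (2 * (Pmx + 1))) ltac:(apply Rdiv_lt_0_compat; lra)) as [J HJ].
    destruct (HJ J (le_n J) t Ht) as [A1 A2].
    pose proof (sum_close K (fun k => sj J k t) (fun k => Sx k t) (fun k => sched k n) _ ltac:(intros; apply HS; auto) A1) as B.
    cbv beta in B. apply Rabs_le_inv' in B. specialize (A2 n Hn). fold (yj J n t) in A2. apply Rabs_le_inv' in A2.
    assert (C : yj J n t <= rsum K (fun k => sj J k t * sched k n)).
    { assert (E : rsum K (fun k => sj J k t * sched k n) = scaled (r J) (fun tau => Bproc sched (ss J) tau n) t).
      { rewrite (scaled_ext (r J) (fun tau => Bproc sched (ss J) tau n) (fun tau => rsum K (fun k => INR (count_sched (ss J) k tau) * sched k n)))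
          by (intros; eapply Bproc_count; eauto).
        rewrite scaled_rsum. apply rsum_ext; intros; unfold sj; symmetry; apply scaled_mulr. }
      rewrite E. unfold yj.
      assert (0 <= scaled (r J) (fun tau => Bproc sched (ss J) tau n - YY J tau n) t).
      { apply scaled_nonneg; auto; [|lra]. intros tau.
        pose proof (Y_le_B N K sched Rm f (AA_ J) (QQ J) (YY J) (ss J) HS HR01 (Fnet J) (FAm J) (FQ0 J) tau n Hn). lra. }
      rewrite scaled_minus in H. lra. }
    assert (e / (2 * (Pmx + 1)) * rsum K (fun k => sched k n) <= e / 2).
    { pose proof (P2 n Hn). assert (0 <= rsum K (fun k => sched k n)) by (apply rsum_nonneg; auto).
      apply Rle_trans with (e / (2 * (Pmx + 1)) * (Pmx + 1)). apply Rmult_le_compat_l; [left; apply Rdiv_lt_0_compat; lra|lra].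
      replace (e / (2 * (Pmx + 1)) * (Pmx + 1)) with (e / 2) by (field; lra). lra. }
    assert (e / (2 * (Pmx + 1)) <= e / 2).
    { unfold Rdiv. apply Rmult_le_compat_l; [lra|]. apply Rinv_le_contravar; lra. }
    lra. }

  assert (FAnn : forall j tau n, (n < N)%nat -> 0 <= AA_ j tau n).
  { intros j tau n Hn. induction tau as [|tau IH]. destruct (Fnet j) as [HA0 _]. rewrite HA0; auto; lra.
    pose proof (FAm j tau n Hn). lra. }
  assert (qnn : forall n t, (n < N)%nat -> 0 <= t <= T -> 0 <= qx n t).
  { intros n t Hn Ht. apply le_eps. intros e He. destruct (UQ e He) as [J HJ]. specialize (HJ J (le_n J) t Ht n Hn).
    assert (0 <= qj J n t) by (unfold qj; apply scaled_nonneg; auto; lra). apply Rabs_le_inv' in HJ. lra. }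
  assert (lamnn : forall n t, (n < N)%nat -> 0 <= t <= T -> 0 <= lam n * t).
  { intros n t Hn Ht. apply le_eps. intros e He. destruct (Heta e He) as [J HJ]. specialize (HJ J (le_n J)).
    pose proof (Fa J t n Ht Hn). assert (0 <= aj J n t) by (unfold aj; apply scaled_nonneg; auto; lra).
    apply Rabs_le_inv' in H. lra. }
  assert (q0 : forall n, (n < N)%nat -> qx n 0 = 0).
  { intros n Hn. apply Rle_antisym; apply le_eps; intros e He;
    destruct (UQ (e/2) ltac:(lra)) as [J1 HJ1]; destruct (Heta (e/2) ltac:(lra)) as [J2 HJ2];
    specialize (HJ1 (max J1 J2) ltac:(lia) 0 ltac:(lra) n Hn); specialize (HJ2 (max J1 J2) ltac:(lia));
    pose proof (FQ0b (max J1 J2) n Hn); unfold qj in HJ1; rewrite scaled_zero in HJ1;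
    apply Rabs_le_inv' in HJ1; lra. }
  assert (lipS : forall k, (k < K)%nat -> lipT T (fun t => Sx k t)).
  { intros k Hk. exists L. split; [auto|]. intros s t Hs Ht. apply SxL; auto. }
  assert (lipY : forall n, (n < N)%nat -> lipT T (fun t => Yx n t)).
  { intros n Hn. exists L. split; [auto|]. intros s t Hs Ht. apply YxL; auto. }
  assert (lipV : forall m, (m < N)%nat -> lipT T (fun t => vx m t)).
  { intros m Hm. unfold vx. apply lip_minus; [|apply lipY; auto]. apply lip_rsum. intros k Hk.
    apply (lip_ext T (fun t => sched k m * Sx k t)); [intros; ring|]. apply lip_scal, lipS; auto. }
  assert (lipQ : forall n, (n < N)%nat -> lipT T (fun t => qx n t)).
  { intros n Hn. unfold qx, IminusRT. apply lip_minus; [apply lip_lin|]. apply lip_minus; [apply lipV; auto|].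
    apply lip_rsum. intros m Hm. apply lip_scal, lipV; auto. }

  assert (DerY : forall t0, 0 < t0 < T -> forall n l, (n < N)%nat -> derivable_pt_lim (fun u => Yx n u) t0 l -> 0 < qx n t0 -> l = 0).
  { intros t0 Ht0 n l Hn Hder Hq.
    set (c0 := qx n t0) in *.
    destruct (lip_near T _ t0 (lipQ n Hn) ltac:(lra) (c0/4) ltac:(lra)) as [rq [Hrq Hnear]].
    set (rho := Rmin (Rmin t0 (T - t0)) rq).
    assert (Hrho : 0 < rho) by (unfold rho; repeat apply Rmin_pos; lra).
    assert (Hr1 : rho <= t0 /\ rho <= T - t0 /\ rho <= rq).
    { unfold rho. pose proof (Rmin_l (Rmin t0 (T - t0)) rq). pose proof (Rmin_r (Rmin t0 (T - t0)) rq).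
      pose proof (Rmin_l t0 (T - t0)). pose proof (Rmin_r t0 (T - t0)). lra. }
    apply (deriv_loc_const (fun u => Yx n u) t0 l (rho/2)); [lra| |auto].
    assert (Habs : forall u, Rabs (u - t0) < rho / 2 -> forall e, 0 < e -> Rabs (Yx n u - Yx n t0) <= e).
    { intros u Hu e He.
      assert (Hm : 0 < Rmin (rho/2) (c0 / (2 * (Pmx + 1)))) by (apply Rmin_pos; [lra|apply Rdiv_lt_0_compat; lra]).
      destruct (UQ (c0/4) ltac:(lra)) as [J1 HJ1]. destruct (U (e/2) ltac:(lra)) as [J2 HJ2].
      destruct (Heta _ Hm) as [J3 HJ3].
      set (j := max (max J1 J2) J3).
      destruct (HJ3 j ltac:(unfold j; lia)) as [_ Hinv].
      pose proof (Rmin_l (rho/2) (c0 / (2 * (Pmx + 1)))). pose proof (Rmin_r (rho/2) (c0 / (2 * (Pmx + 1)))).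
      assert (Hw : forall u', Rabs (u' - t0) <= rho / 2 -> yj j n u' = yj j n t0).
      { unfold yj. apply scaled_window; auto; try lra.
        intros tau Htau. set (p := INR tau / INR (r j)) in *.
        assert (Hp : 0 <= p <= T) by lra.
        pose proof (HJ1 j ltac:(unfold j; lia) p Hp n Hn) as Q1. unfold qj, p in Q1. rewrite scaled_grid in Q1 by auto.
        fold p in Q1.
        assert (Q2 : Rabs (qx n p - c0) <= c0 / 4) by (apply Hnear; auto; apply Rabs_le; lra).
        apply Rabs_le_inv' in Q1. apply Rabs_le_inv' in Q2.
        assert (Hq2 : c0 / 2 <= QQ j tau n / INR (r j)) by lra.
        specialize (Hrpos j).
        assert (Hbig : Pmx + 1 < QQ j tau n).
        { assert (I1 : 1 < INR (r j) * (c0 / (2 * (Pmx + 1)))).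
          { assert (Hinv2 : / INR (r j) < c0 / (2 * (Pmx + 1))) by lra. apply (Rmult_lt_compat_l (INR (r j))) in Hinv2; auto. rewrite Rinv_r in Hinv2 by lra. lra. }
          assert (I2 : QQ j tau n = QQ j tau n / INR (r j) * INR (r j)) by (field; lra).
          assert (I3 : c0 / 2 * INR (r j) = (Pmx + 1) * (INR (r j) * (c0 / (2 * (Pmx + 1))))) by (field; lra).
          assert (c0 / 2 * INR (r j) <= QQ j tau n / INR (r j) * INR (r j)) by (apply Rmult_le_compat_r; lra).
          nra. }
        destruct (Fnet j) as [_ [_ [Hsig [HY _]]]].
        pose proof (HY tau n Hn). pose proof (P1 (ss j tau) n (Hsig tau) Hn).
        rewrite Rmax_right in H1 by lra. lra. }
      assert (Hu0 : 0 <= u <= T) by (apply Rabs_lt_inv' in Hu; lra).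
      destruct (HJ2 j ltac:(unfold j; lia) u Hu0) as [_ A1]. destruct (HJ2 j ltac:(unfold j; lia) t0 ltac:(lra)) as [_ A2].
      specialize (A1 n Hn). specialize (A2 n Hn). fold (yj j n u) in A1. fold (yj j n t0) in A2.
      rewrite Hw in A1 by lra.
      replace (Yx n u - Yx n t0) with (- (yj j n t0 - Yx n u) + (yj j n t0 - Yx n t0)) by ring.
      eapply Rle_trans. apply Rabs_triang. rewrite Rabs_Ropp. lra. }
    intros u Hu. apply Rle_antisym; apply le_eps; intros e He; pose proof (Habs u Hu e He) as Z; apply Rabs_le_inv' in Z; lra. }

  assert (DerS : forall t0, 0 < t0 < T -> forall k l, (k < K)%nat -> derivable_pt_lim (fun u => Sx k u) t0 l ->
      ~ is_maximizer N K sched Rm f (fun n => qx n t0) k -> l = 0).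
  { intros t0 Ht0 k l Hk Hder Hnm.
    set (q0v := fun n => qx n t0) in *.
    assert (Hq0v : forall n, (n < N)%nat -> 0 <= q0v n) by (intros; unfold q0v; apply qnn; auto; lra).
    assert (Hk' : exists k', (k' < K)%nat /\ dotN N (sched k) (weight N Rm f q0v) < dotN N (sched k') (weight N Rm f q0v)).
    { apply NNPP. intros Hc. apply Hnm. split; auto. intros k' Hk'. apply Rnot_lt_le. intros Hlt. apply Hc. exists k'. auto. }
    destruct Hk' as [k' [Hk' Hgap]].
    set (gam := dotN N (sched k') (weight N Rm f q0v) - dotN N (sched k) (weight N Rm f q0v)).
    destruct (dot_cont N K sched Rm f HS HR01 Hf q0v Hq0v (gam/2) ltac:(unfold gam; lra)) as [rq [Hrq Hcont]].
    destruct (fin_min_pos N (fun n x => forall u, 0 <= u <= T -> Rabs (u - t0) <= x -> Rabs (qx n u - qx n t0) <= rq / 3)) as [r1 [Hr1 Hnear]].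
    { intros c x y Hx Hxy H u Hu Hut. apply H; auto; lra. }
    { intros n Hn. apply (lip_near T (fun t => qx n t) t0 (lipQ n Hn)); lra. }
    set (rho := Rmin (Rmin t0 (T - t0)) r1).
    assert (Hrho : 0 < rho) by (unfold rho; repeat apply Rmin_pos; lra).
    assert (Hrr : rho <= t0 /\ rho <= T - t0 /\ rho <= r1).
    { unfold rho. pose proof (Rmin_l (Rmin t0 (T - t0)) r1). pose proof (Rmin_r (Rmin t0 (T - t0)) r1).
      pose proof (Rmin_l t0 (T - t0)). pose proof (Rmin_r t0 (T - t0)). lra. }
    apply (deriv_loc_const (fun u => Sx k u) t0 l (rho/2)); [lra| |auto].
    assert (Habs : forall u, Rabs (u - t0) < rho / 2 -> forall e, 0 < e -> Rabs (Sx k u - Sx k t0) <= e).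
    { intros u Hu e He.
      destruct (UQ (rq/3) ltac:(lra)) as [J1 HJ1]. destruct (U (e/2) ltac:(lra)) as [J2 HJ2].
      destruct (Heta (rho/2) ltac:(lra)) as [J3 HJ3].
      set (j := max (max J1 J2) J3).
      destruct (HJ3 j ltac:(unfold j; lia)) as [_ Hinv].
      assert (Hw : forall u', Rabs (u' - t0) <= rho / 2 -> sj j k u' = sj j k t0).
      { unfold sj. apply scaled_window; auto; try lra.
        intros tau Htau. set (p := INR tau / INR (r j)) in *.
        assert (Hp : 0 <= p <= T) by lra.
        destruct (Fnet j) as [_ [_ [Hsig [_ [_ Hmax]]]]].
        assert (Hne : ss j tau <> k).
        { intros Heq. specialize (Hrpos j).
          set (q' := fun n => / INR (r j) * QQ j tau n).
          assert (Hmq : is_maximizer N K sched Rm f q' k).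
          { unfold q'. rewrite <- Heq. apply Hscale. intros; apply FQnn; auto. apply Hmax.
            left; apply Rinv_0_lt_compat; lra. }
          assert (Hcl : forall n, (n < N)%nat -> 0 <= q' n /\ Rabs (q' n - q0v n) < rq).
          { intros n Hn. split. unfold q'. apply Rmult_le_pos; [left; apply Rinv_0_lt_compat; lra|apply FQnn; auto].
            pose proof (HJ1 j ltac:(unfold j; lia) p Hp n Hn) as Q1. unfold qj, p in Q1. rewrite scaled_grid in Q1 by auto.
            assert (Q2 : Rabs (qx n p - qx n t0) <= rq / 3) by (apply Hnear; auto; apply Rabs_le; lra).
            replace (q' n - q0v n) with ((QQ j tau n / INR (r j) - qx n p) + (qx n p - qx n t0))
              by (unfold q', q0v, Rdiv; ring).
            eapply Rle_lt_trans. apply Rabs_triang. fold p in Q1. lra. }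
          pose proof (Hcont q' Hcl k Hk) as C1. pose proof (Hcont q' Hcl k' Hk') as C2.
          destruct Hmq as [_ Hmq]. specialize (Hmq k' Hk').
          apply Rabs_lt_inv' in C1. apply Rabs_lt_inv' in C2. unfold gam in *. lra. }
        simpl. destruct (Nat.eqb_spec (ss j tau) k); [contradiction|]. rewrite Nat.add_0_r. auto. }
      assert (Hu0 : 0 <= u <= T) by (apply Rabs_lt_inv' in Hu; lra).
      destruct (HJ2 j ltac:(unfold j; lia) u Hu0) as [A1 _]. destruct (HJ2 j ltac:(unfold j; lia) t0 ltac:(lra)) as [A2 _].
      specialize (A1 k Hk). specialize (A2 k Hk). fold (sj j k u) in A1. fold (sj j k t0) in A2.
      rewrite Hw in A1 by lra.
      replace (Sx k u - Sx k t0) with (- (sj j k t0 - Sx k u) + (sj j k t0 - Sx k t0)) by ring.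
      eapply Rle_trans. apply Rabs_triang. rewrite Rabs_Ropp. lra. }
    intros u Hu. apply Rle_antisym; apply le_eps; intros e He; pose proof (Habs u Hu e He) as Z; apply Rabs_le_inv' in Z; lra. }

  set (h := {| fq := fun t n => qx n t; fa := fun t n => lam n * t; fy := fun t n => Yx n t; fs := fun t k => Sx k t |}).
  assert (HF : is_FMS0 N K sched Rm f lam T h).
  { unfold is_FMS0; simpl. split. intros; apply q0; auto.
    split. intros n Hn. split; [apply abs_cont_lip, lipQ; auto|split; [apply abs_cont_lip, lip_lin|apply abs_cont_lip, lipY; auto]].
    split. intros k Hk; apply abs_cont_lip, lipS; auto.
    split. intros t Ht. split. intros n Hn. split; [apply qnn; auto|split; [apply lamnn; auto|apply Yxnn; auto]].
      split. intros k Hk. apply Sxnn; auto.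
      split. intros n Hn. rewrite q0 by auto. unfold qx, vx. ring.
      split. intros; auto.
      split. apply Sxsum; auto.
      intros n Hn. apply YxB; auto.
    split. intros k Hk s t Hs Hst Ht. apply SxM; auto.
    split. intros n Hn s t Hs Hst Ht. apply YxM; auto.
    intros t Ht. split. intros n l Hn Hdv Hq. apply (DerY t Ht n l Hn Hdv Hq).
    intros k l Hk Hdv Hnm. apply (DerS t Ht k l Hk Hdv Hnm). }
  destruct (UQ (delta/2) ltac:(lra)) as [J1 HJ1]. destruct (U (delta/2) ltac:(lra)) as [J2 HJ2].
  destruct (Heta (delta/2) ltac:(lra)) as [J3 HJ3].
  set (j := max (max J1 J2) J3).
  apply (Hnd j). exists h. split; auto. exists (delta/2). split; [lra|]. intros t Ht. simpl.
  destruct (HJ2 j ltac:(unfold j; lia) t Ht) as [A1 A2]. destruct (HJ3 j ltac:(unfold j; lia)) as [E1 _].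
  split.
  - intros n Hn. split. apply (HJ1 j ltac:(unfold j; lia) t Ht n Hn).
    split. pose proof (Fa j t n Ht Hn). unfold aj in H. lra. apply A2; auto.
  - intros k Hk. apply A1; auto.
Qed.
End DL.

Section Prob.
Variable Omega : Type.
Variables (F : (Omega -> Prop) -> Prop) (P : (Omega -> Prop) -> R).
Hypothesis HF : sigma_algebra F.
Hypothesis HP : probability F P.

Lemma ev_ext (E E' : Omega -> Prop) : (forall w, E w <-> E' w) -> E = E'.
Proof. intros H. apply functional_extensionality. intros w. apply propositional_extensionality. auto. Qed.

Lemma Fext E E' : F E -> (forall w, E w <-> E' w) -> F E'.
Proof. intros H1 H2. rewrite <- (ev_ext E E'); auto. Qed.

Lemma F_true : F (fun _ => True). Proof. apply HF. Qed.
Lemma F_compl E : F E -> F (fun w => ~ E w). Proof. apply HF. Qed.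
Lemma F_false : F (fun _ => False).
Proof. apply (Fext (fun w => ~ True)). apply F_compl, F_true. intros; tauto. Qed.
Lemma F_exists (E : nat -> Omega -> Prop) : (forall i, F (E i)) -> F (fun w => exists i, E i w).
Proof. apply HF. Qed.
Lemma F_or A B : F A -> F B -> F (fun w => A w \/ B w).
Proof. intros HA HB. apply (Fext (fun w => exists i, (match i with O => A | S _ => B end) w)).
  apply F_exists. intros [|i]; auto.
  intros w. split. intros [[|i] H]; auto. intros [H|H]. exists O; auto. exists 1%nat; auto. Qed.
Lemma F_and A B : F A -> F B -> F (fun w => A w /\ B w).
Proof. intros HA HB. apply (Fext (fun w => ~ (~ A w \/ ~ B w))). apply F_compl, F_or; apply F_compl; auto.
  intros w. tauto. Qed.
Lemma F_forall (E : nat -> Omega -> Prop) : (forall i, F (E i)) -> F (fun w => forall i, E i w).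
Proof. intros H. apply (Fext (fun w => ~ exists i, ~ E i w)). apply F_compl, F_exists. intros; apply F_compl; auto.
  intros w. split. intros Hn i. apply NNPP. intros Hc. apply Hn. exists i; auto. intros Ha [i Hi]. apply Hi, Ha. Qed.
Lemma F_cond (C : Prop) E : (C -> F E) -> F (fun w => C /\ E w).
Proof. intros H. destruct (classic C) as [Hc|Hc].
  apply (Fext E). auto. intros; tauto. apply (Fext (fun _ => False)). apply F_false. intros; tauto. Qed.
Lemma F_imp (C : Prop) E : (C -> F E) -> F (fun w => C -> E w).
Proof. intros H. destruct (classic C) as [Hc|Hc].
  apply (Fext E). auto. intros; tauto. apply (Fext (fun _ => True)). apply F_true. intros; tauto. Qed.

Lemma P_empty : P (fun _ => False) = 0.
Proof. destruct HP as [H0 [H1 H2]].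
  specialize (H2 (fun _ _ => False) (fun _ => F_false) ltac:(intros; auto)).
  cbv beta in H2. rewrite (ev_ext (fun w => exists _ : nat, False) (fun _ => False)) in H2 by (intros; split; [intros [_ []]|intros []]).
  set (c := P (fun _ => False)) in *.
  assert (Hs : forall n, sum_f_R0 (fun _ => c) n = INR (S n) * c).
  { induction n; simpl sum_f_R0. simpl; ring. rewrite IHn. rewrite (S_INR (S n)). ring. }
  apply NNPP. intros Hc. assert (Hca : 0 < Rabs c) by (apply Rabs_pos_lt; auto).
  destruct (H2 (Rabs c / 2) ltac:(lra)) as [M HM]. specialize (HM (S M) ltac:(lia)).
  rewrite Hs in HM. unfold Rdist in HM.
  replace (INR (S (S M)) * c - c) with (INR (S M) * c) in HM by (rewrite (S_INR (S M)); ring).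
  rewrite Rabs_mult, Rabs_right in HM by (apply Rle_ge, pos_INR).
  assert (1 <= INR (S M)) by (apply (le_INR 1); lia). nra. Qed.

Lemma P_add2 A B : F A -> F B -> (forall w, A w -> B w -> False) -> P (fun w => A w \/ B w) = P A + P B.
Proof. intros HA HB Hd. destruct HP as [H0 [H1 H2]].
  set (E := fun i : nat => match i with O => A | 1%nat => B | _ => fun _ => False end).
  assert (HE : forall i, F (E i)). { intros [|[|i]]; simpl; auto. apply F_false. }
  specialize (H2 E HE). assert (Hdis : forall i j, i <> j -> forall w, E i w -> E j w -> False).
  { intros [|[|i]] [|[|j]] Hij w; simpl; intros; try tauto; try lia. eapply Hd; eauto. eapply Hd; eauto. }
  specialize (H2 Hdis).
  rewrite (ev_ext (fun w => exists i, E i w) (fun w => A w \/ B w)) in H2.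
  2:{ intros w. split. intros [[|[|i]] Hi]; simpl in Hi; tauto. intros [Ha|Hb]. exists O; auto. exists 1%nat; auto. }
  apply (uniqueness_sum (fun i => P (E i))); auto.
  intros eps He. exists 1%nat. intros n Hn. unfold Rdist.
  assert (Hs : forall m, sum_f_R0 (fun i => P (E i)) (S m) = P A + P B).
  { induction m. simpl. ring. simpl sum_f_R0 in *. rewrite IHm. simpl. rewrite P_empty. ring. }
  destruct n. lia. rewrite Hs. replace (P A + P B - (P A + P B)) with 0 by ring. rewrite Rabs_R0. lra. Qed.

Lemma P_split A B : F A -> F B -> P A = P (fun w => A w /\ B w) + P (fun w => A w /\ ~ B w).
Proof. intros HA HB. rewrite <- P_add2. f_equal. apply ev_ext. intros w. tauto.
  apply F_and; auto. apply F_and; auto. apply F_compl; auto. intros w; tauto. Qed.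

Lemma P_nonneg A : F A -> 0 <= P A. Proof. apply HP. Qed.

Lemma P_mono A B : F A -> F B -> (forall w, A w -> B w) -> P A <= P B.
Proof. intros HA HB Hab. rewrite (P_split B A HB HA).
  rewrite (ev_ext (fun w => B w /\ A w) A) by (intros w; split; [tauto|intros; split; auto]).
  pose proof (P_nonneg (fun w => B w /\ ~ A w) (F_and _ _ HB (F_compl _ HA))). lra. Qed.

Lemma P_true : P (fun _ => True) = 1. Proof. apply HP. Qed.

Lemma P_inter_lb A B : F A -> F B -> P A - P B <= P (fun w => A w /\ ~ B w).
Proof. intros HA HB. rewrite (P_split A B HA HB).
  pose proof (P_mono (fun w => A w /\ B w) B (F_and _ _ HA HB) HB ltac:(intros w [_ H]; auto)). lra. Qed.

Lemma P_increasing (G : nat -> Omega -> Prop) : (forall c, F (G c)) -> (forall c w, G c w -> G (S c) w) ->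
  (forall w, exists c, G c w) -> forall eps, 0 < eps -> exists c, 1 - eps <= P (G c).
Proof. intros HG Hinc Hall eps He.
  set (D := fun i : nat => match i with O => G O | S c => fun w => G (S c) w /\ ~ G c w end).
  assert (HD : forall i, F (D i)). { intros [|i]; simpl; auto. apply F_and; auto. apply F_compl; auto. }
  assert (Gmono : forall i j, (i <= j)%nat -> forall w, G i w -> G j w). { intros i j Hij w Hw. induction Hij; auto. }
  assert (Hdis : forall i j, i <> j -> forall w, D i w -> D j w -> False).
  { assert (K1 : forall i j, (i < j)%nat -> forall w, D i w -> D j w -> False).
    { intros i j Hij w Hi Hj. destruct j as [|j]; [lia|]. simpl in Hj. destruct Hj as [_ Hj]. apply Hj.
      apply (Gmono i j ltac:(lia)). destruct i; simpl in Hi; tauto. }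
    intros i j Hij w Hi Hj. destruct (lt_dec i j). eapply K1; eauto. apply (K1 j i ltac:(lia) w Hj Hi). }
  destruct HP as [H0 [H1 H2]].
  specialize (H2 D HD Hdis).
  rewrite (ev_ext (fun w => exists i, D i w) (fun _ => True)) in H2.
  2:{ intros w. split; auto. intros _. destruct (Hall w) as [c Hc].
      assert (forall c, G c w -> exists i, D i w).
      { induction c0. intros; exists O; auto. intros Hc0. destruct (classic (G c0 w)). auto. exists (S c0). simpl; auto. }
      eauto. }
  rewrite H1 in H2.
  assert (Hps : forall c, sum_f_R0 (fun i => P (D i)) c = P (G c)).
  { induction c. simpl. auto. simpl sum_f_R0. rewrite IHc.
    rewrite <- P_add2; auto. f_equal. apply ev_ext. intros w. simpl. split.
    intros [H|[H _]]; auto. intros H. destruct (classic (G c w)); auto.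
    apply F_and; auto. apply F_compl; auto. intros w Hw [_ Hn]; auto. }
  destruct (H2 eps He) as [M HM]. exists M. specialize (HM M (le_n M)). rewrite Hps in HM. unfold Rdist in HM.
  apply Rabs_lt_inv' in HM. lra. Qed.

End Prob.

Lemma div_ge_iff b R d : 0 < R -> (b / R >= d <-> b >= d * R).
Proof. intros HR. split; intros H.
  - apply Rle_ge. apply Rge_le in H. apply (Rmult_le_compat_r R) in H; [|lra].
    unfold Rdiv in H. rewrite Rmult_assoc, Rinv_l in H by lra. lra.
  - apply Rle_ge. apply Rge_le in H. unfold Rdiv. apply (Rmult_le_reg_r R); auto.
    rewrite Rmult_assoc, Rinv_l by lra. lra. Qed.

Lemma abs_ge_iff a c : Rabs a >= c <-> a >= c \/ a <= - c.
Proof. destruct (Rcase_abs a) as [Ha|Ha]; [rewrite Rabs_left by auto|rewrite Rabs_right by auto]; split; intros; lra. Qed.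

Theorem corollary4p4
  (N K : nat) (sched : nat -> nat -> R) (Rm : nat -> nat -> R) (f : R -> R)
  (HS : schedule_set N K sched) (HR : routing_matrix N Rm) (Hf : f_standing f)
  (Hscale : scale_invariance N K sched Rm f) (Hmh : multihop_closure N K sched Rm)
  (Omega : Type) (F : (Omega -> Prop) -> Prop) (P : (Omega -> Prop) -> R)
  (HF : sigma_algebra F) (HP : probability F P)
  (A Q Y : Omega -> nat -> nat -> R) (sig : Omega -> nat -> nat)
  (Hnet : forall w, MW_network N K sched Rm f (A w) (Q w) (Y w) (sig w))
  (HQ0 : forall w n, (n < N)%nat -> 0 <= Q w O n)
  (HQ0m : forall n c, (n < N)%nat -> F (fun w => Q w O n <= c))
  (HAm : forall tau n c, (n < N)%nat -> F (fun w => A w tau n <= c))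
  (HAmono : forall w tau n, (n < N)%nat -> A w tau n <= A w (S tau) n)
  (HAstat : stationary_increments N P A)
  (lam : nat -> R)
  (Hlam : exists E, F E /\ P E = 1 /\
            forall w, E w -> forall n, (n < N)%nat ->
              Un_cv (fun tau => A w tau n / INR tau) (lam n))
  (dr : nat -> R) (Hdr : Un_cv dr 0)
  (Hdev : Un_cv (fun r => P (fun w => exists tau n, (tau <= r)%nat /\ (n < N)%nat /\
                    Rabs (A w tau n - lam n * INR tau) / INR r >= dr r)) 0)
  (T : R) (HT : 0 < T) :
  forall delta, 0 < delta ->
    prob_tends_to_one F P
      (fun r w => dist_FMS0_lt N K sched Rm f lam T
                    (scaled_path r (A w) (Q w) (Y w) (sig w)) delta).
Proof.
  intros delta Hdel eps Heps.
  destruct HS as [HS0 _]. destruct HR as [HR01 _].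
  destruct (nat_above (T + 1)) as [mm Hmm].
  destruct (DL N K sched Rm f HS0 HR01 Hf Hscale lam T mm HT (Rlt_le _ _ Hmm) delta Hdel) as [eta [Heta [r1 Hr1]]].
  assert (Hmmpos : (1 <= mm)%nat) by (destruct mm; [simpl in Hmm; lra|lia]).
  assert (HmmR : 0 < INR mm) by lra.
  set (G := fun (c : nat) w => forall n, (n < N)%nat -> Q w O n <= INR c).
  assert (FG : forall c, F (G c)).
  { intros c. unfold G. apply (F_forall Omega F HF (fun n w => (n < N)%nat -> Q w O n <= INR c)). intros n.
    apply F_imp; auto. }
  assert (Ginc : forall c w, G c w -> G (S c) w).
  { intros c w H n Hn. specialize (H n Hn). rewrite S_INR. lra. }
  assert (Gall : forall w, exists c, G c w).
  { intros w. destruct (nat_above (rsum N (fun n => Rabs (Q w O n)))) as [c Hc]. exists c. intros n Hn.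
    pose proof (rsum_term_le N (fun n => Rabs (Q w O n)) n ltac:(intros; apply Rabs_pos) Hn).
    pose proof (Rle_abs (Q w O n)). cbv beta in H. lra. }
  destruct (P_increasing Omega F P HF HP G FG Ginc Gall (eps/2) ltac:(lra)) as [c Hc].
  destruct (Hdev (eps/2) ltac:(lra)) as [R0 HR0].
  destruct (Hdr (eta / INR mm) ltac:(apply Rdiv_lt_0_compat; lra)) as [R1 HR1].
  destruct (nat_above (INR c / eta)) as [rc Hrc].
  exists (max (max r1 R0) (max R1 (max rc 1))). intros r Hr.
  set (R := (mm * r)%nat).
  assert (HRr : (r <= R)%nat) by (unfold R; nia).
  assert (HRpos : 0 < INR R) by (apply lt_0_INR; lia).
  set (Ev := fun w => exists tau n, (tau <= R)%nat /\ (n < N)%nat /\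
                    Rabs (A w tau n - lam n * INR tau) / INR R >= dr R).
  assert (FEv : F Ev).
  { apply (Fext Omega F (fun w => exists tau, exists n, ((tau <= R)%nat /\ (n < N)%nat) /\
       (A w tau n >= lam n * INR tau + dr R * INR R \/ A w tau n <= lam n * INR tau - dr R * INR R))).
    - apply F_exists; auto. intros tau. apply F_exists; auto. intros n. apply F_cond; auto. intros [_ Hn].
      apply F_or; auto.
      + set (y := lam n * INR tau + dr R * INR R).
        apply (Fext Omega F (fun w => ~ exists k : nat, A w tau n <= y - / (INR k + 1))).
        apply F_compl; auto. apply F_exists; auto.
        intros w. split.
        * intros Hn2. apply Rnot_lt_ge. intros Hlt. destruct (inv_small (y - A w tau n) ltac:(lra)) as [k Hk].
          apply Hn2. exists k. specialize (Hk k (le_n k)). lra.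
        * intros Hge [k Hk]. assert (0 < / (INR k + 1)) by (apply Rinv_0_lt_compat; pose proof (pos_INR k); lra). lra.
    - intros w. unfold Ev. split.
      + intros [tau [n [[H1 H2] H3]]]. exists tau, n. split; auto. split; auto.
        apply div_ge_iff; auto. apply abs_ge_iff. lra.
      + intros [tau [n [H1 [H2 H3]]]]. exists tau, n. split; [split; auto|].
        apply div_ge_iff in H3; auto. apply abs_ge_iff in H3. lra. }
  exists (fun w => G c w /\ ~ Ev w). split; [apply F_and; auto; apply F_compl; auto|]. split.
  - pose proof (P_inter_lb Omega F P HF HP (G c) Ev (FG c) FEv).
    specialize (HR0 R ltac:(lia)). unfold Rdist in HR0. rewrite Rminus_0_r in HR0. apply Rabs_lt_inv' in HR0.
    fold Ev in HR0. lra.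
  - intros w [Hg Hnev]. apply (Hr1 r ltac:(lia)).
    split; [apply Hnet|]. split.
    + intros n Hn. split. apply HQ0; auto. specialize (Hg n Hn).
      assert (INR rc <= INR r) by (apply le_INR; lia).
      assert (INR c < eta * INR r).
      { apply (Rmult_lt_compat_r eta) in Hrc; auto. unfold Rdiv in Hrc. rewrite Rmult_assoc, Rinv_l in Hrc by lra. nra. }
      lra.
    + split. intros tau n Hn; apply HAmono; auto.
      intros tau n Htau Hn. specialize (HR1 R ltac:(lia)). unfold Rdist in HR1. rewrite Rminus_0_r in HR1.
      apply Rabs_lt_inv' in HR1.
      assert (Hlt : Rabs (A w tau n - lam n * INR tau) / INR R < dr R).
      { apply Rnot_ge_lt. intros Hge. apply Hnev. exists tau, n. auto. }
      assert (Habs : Rabs (A w tau n - lam n * INR tau) < dr R * INR R).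
      { unfold Rdiv in Hlt. apply (Rmult_lt_compat_r (INR R)) in Hlt; auto. rewrite Rmult_assoc, Rinv_l in Hlt by lra. lra. }
      assert (HRe : INR R = INR mm * INR r) by (unfold R; apply mult_INR).
      assert (dr R * INR R <= eta / INR mm * INR R) by (apply Rmult_le_compat_r; lra).
      replace (eta / INR mm * INR R) with (eta * INR r) in H by (rewrite HRe; field; lra). lra.
Qed.
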